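(* Let $N\ge1$, $\omega_1,\dots,\omega_N\in\mathbb{R}$, $\kappa\in\mathbb{R}$, $(\theta_i^0)\in\mathbb{R}^N$, and let $\Theta(t)=(\theta_i(t))$ solve \[ \dot\theta_i=\omega_i-\frac{\kappa}{N}\sum_{j=1}^N(1+\cos\theta_j)\sin\theta_i,\qquad\theta_i(0)=\theta_i^0, \] with $R(t)=\frac1N\sum_j(1+\cos\theta_j(t))$ and $R_0=R(0)$. Let $\|\Omega\|_\infty=\max_i|\omega_i|$. Suppose $R_0>0$, fix $\mu\in(0,\min\{R_0,1\})$ and suppose \[ \kappa>\frac{\|\Omega\|_\infty}{(R_0-\mu)\sqrt{\mu(2-\mu)}}. \] Set $\tau=\frac{\pi}{\kappa(R_0-\mu)\sqrt{\mu(2-\mu)}-\|\Omega\|_\infty}$ and $\lambda=\kappa(R_0-\mu)(1-\mu)$. Then: (a) $R(t)\ge R_0-\mu$ for all $t\ge0$; (b) for all $i$, $\lim_{t\to\infty}\theta_i(t)$ exists, $\sup_{t\ge0}\theta_i(t)-\inf_{t\ge0}\theta_i(t)<2\pi$ and $\lim_{t\to\infty}\dot\theta_i(t)=0$; (c) for any $i$ and $t_0\ge0$ with $\cos\theta_i(t_0)\ge-1+\mu$, we have $\cos\theta_i(t)\ge-1+\mu$ for $t\ge t_0$ and $\cos\theta_i(t)\ge1-\mu$ for $t\ge t_0+\tau$; (d) for any $i$, either $\sup_{t\ge0}\cos\theta_i(t)<-1+\mu$, in which case $\lim_{t\to\infty}\theta_i(t)=\pi-\sin^{-1}\frac{\omega_i}{\kappa\lim_{t\to\infty}R(t)}\pmod{2\pi}$,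 or $\sup_{t\ge0}\cos\theta_i(t)\ge-1+\mu$, in which case $\lim_{t\to\infty}\theta_i(t)=\sin^{-1}\frac{\omega_i}{\kappa\lim_{t\to\infty}R(t)}\pmod{2\pi}$; (e) for fixed $i,j$, suppose there is $t_0\ge0$ with $\cos\theta_i(t_0)\ge-1+\mu$ and $\cos\theta_j(t_0)\ge-1+\mu$. If $\omega_i>\omega_j$, then after translations by multiples of $2\pi$, \[ \theta_i(t)-\theta_j(t)\le\frac{\omega_i-\omega_j}{\lambda}+\pi e^{-\lambda(t-t_0-\tau)}\quad\text{for }t\ge t_0+\tau, \] \[ \theta_i(t)-\theta_j(t)\ge\frac{\omega_i-\omega_j}{2\kappa}-\frac{\omega_i-\omega_j}{2\kappa}e^{-2\kappa\left(t-t_0-\tau-\frac{\pi}{\omega_i-\omega_j}\right)}\quad\text{for }t\ge t_0+\tau+\frac{\pi}{\omega_i-\omega_j}; \] if $\omega_i=\omega_j$, then after translations by multiples of $2\pi$, $|\theta_i(t)-\theta_j(t)|\le\pi e^{-\lambda(t-t_0-\tau)}$ for $t\ge t_0+\tau$ (so $\theta_i-\theta_j\to0$). *)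

(* Defs.v *)
From Stdlib Require Import Reals Lra ZArith.
From Coquelicot Require Import Coquelicot.
Open Scope R_scope.

Fixpoint sumN (N : nat) (f : nat -> R) : R :=
  match N with
  | O => 0
  | S n => sumN n f + f n
  end.

(* maxN N f = max_{i<N} f i  (0 for N = 0; only used with N >= 1 and f >= 0) *)
Fixpoint maxN (N : nat) (f : nat -> R) : R :=
  match N with
  | O => 0
  | S O => f O
  | S n => Rmax (maxN n f) (f n)
  end.

Definition Omega_inf (N : nat) (omega : nat -> R) : R :=
  maxN N (fun i => Rabs (omega i)).

Definition order_param (N : nat) (theta : nat -> R -> R) (t : R) : R :=
  / INR N * sumN N (fun j => 1 + cos (theta j t)).

Definition is_solution (N : nat) (omega : nat -> R) (kappa : R)
    (theta0 : nat -> R) (theta : nat -> R -> R) : Prop :=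
  (forall i, (i < N)%nat -> theta i 0 = theta0 i) /\
  (forall i t, (i < N)%nat -> 0 <= t ->
     is_derive (theta i) t
       (omega i - kappa / INR N * sumN N (fun j => 1 + cos (theta j t))
                   * sin (theta i t))).

(* Main.v *)
Require Import Defs.
From Stdlib Require Import Reals Lra Lia ZArith Classical List.
From Coquelicot Require Import Coquelicot.
Require Import Defs.
Open Scope R_scope.

Lemma cont_eps (f : R -> R) x : continuity_pt f x ->
  forall eps, 0 < eps -> exists del, 0 < del /\ forall y, Rabs (y - x) < del -> Rabs (f y - f x) < eps.
Proof.
  intros Hc eps He. destruct (Hc eps He) as [d [Hd H]].
  exists d; split; auto. intros y Hy.
  destruct (Req_dec y x) as [->|Hne].
  - rewrite Rminus_diag, Rabs_R0; lra.
  - apply (H y). split; [split; [exact I| auto] | exact Hy].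
Qed.

Lemma deriv_cont f x l : is_derive f x l -> continuity_pt f x.
Proof.
  intros H. apply is_derive_Reals in H.
  apply derivable_continuous_pt. exists l; exact H.
Qed.

Lemma last_time (f : R -> R) a b M : a <= b ->
  (forall t, a <= t <= b -> continuity_pt f t) ->
  f a <= M -> M < f b ->
  exists c, a <= c < b /\ f c = M /\ forall t, c < t <= b -> M < f t.
Proof.
  intros Hab Hc Ha Hb.
  set (E := fun t => a <= t <= b /\ f t <= M).
  assert (HE : bound E) by (exists b; intros t [Ht _]; lra).
  assert (HE2 : exists x, E x) by (exists a; split; [lra|auto]).
  destruct (completeness E HE HE2) as [c [Hub Hlub]].
  assert (Hac : a <= c) by (apply Hub; split; [lra|auto]).
  assert (Hcb : c <= b) by (apply Hlub; intros t [Ht _]; lra).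
  assert (Hfc : f c <= M).
  { destruct (Rle_dec (f c) M) as [|Hn]; auto. exfalso.
    destruct (cont_eps f c (Hc c (conj Hac Hcb)) (f c - M)) as [d [Hd Hd']]; [lra|].
    assert (Hx : exists x, E x /\ c - d < x).
    { apply NNPP; intro Hno.
      assert (c <= c - d); [|lra].
      apply Hlub. intros x Ex. destruct (Rle_dec x (c-d)); auto.
      exfalso; apply Hno; exists x; split; auto; lra. }
    destruct Hx as [x [[Hx1 Hx2] Hx3]].
    assert (x <= c) by (apply Hub; split; auto).
    specialize (Hd' x). rewrite Rabs_left1 in Hd' by lra.
    assert (- (x - c) < d) by (rewrite Rabs_left1 in *; lra).
    unfold Rabs in Hd'. destruct (Rcase_abs (f x - f c)); [|lra].
    assert (Rabs (x - c) < d) by (rewrite Rabs_left1; lra).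
    specialize (Hd' H0). lra. }
  assert (Hafter : forall t, c < t <= b -> M < f t).
  { intros t Ht. destruct (Rlt_dec M (f t)) as [|Hn]; auto.
    assert (t <= c) by (apply Hub; split; [lra|lra]). lra. }
  assert (Hcb' : c < b).
  { destruct (Rle_lt_or_eq_dec _ _ Hcb); auto. subst; lra. }
  exists c; split; [lra|]; split; auto.
  destruct (Rle_lt_or_eq_dec _ _ Hfc) as [Hlt|]; auto. exfalso.
  destruct (cont_eps f c (Hc c (conj Hac Hcb)) (M - f c)) as [d [Hd Hd']]; [lra|].
  set (t := Rmin (c + d/2) b).
  assert (c < t <= b) by (unfold t; apply Rmin_case_strong; intros; lra).
  assert (Rabs (t - c) < d).
  { rewrite Rabs_right by lra. unfold t; apply Rmin_case_strong; intros; lra. }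
  specialize (Hd' t H0). specialize (Hafter t H).
  apply Rabs_def2 in Hd'. lra.
Qed.

Lemma first_time (f : R -> R) a b M : a <= b ->
  (forall t, a <= t <= b -> continuity_pt f t) ->
  f a < M -> M <= f b ->
  exists c, a < c <= b /\ f c = M /\ forall t, a <= t < c -> f t < M.
Proof.
  intros Hab Hc Ha Hb.
  set (g := fun t => - f (a + b - t)).
  assert (Hg : forall t, a <= t <= b -> continuity_pt g t).
  { intros t Ht. unfold g.
    apply continuity_pt_opp.
    apply (continuity_pt_comp (fun t => a + b - t) f).
    - apply continuity_pt_minus; [apply continuity_pt_const; intros ?; auto | apply derivable_continuous_pt, derivable_pt_id].
    - apply Hc; lra. }
  destruct (last_time g a b (-M) Hab Hg) as [c [Hc1 [Hc2 Hc3]]].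
  - unfold g. replace (a + b - a) with b by ring. lra.
  - unfold g. replace (a + b - b) with a by ring. lra.
  - exists (a + b - c). split; [lra|]. split.
    + unfold g in Hc2. lra.
    + intros t Ht. specialize (Hc3 (a + b - t)). unfold g in Hc3.
      replace (a + b - (a + b - t)) with t in Hc3 by ring. assert (-M < - f t) by (apply Hc3; lra). lra.
Qed.

Lemma pos_deriv_right f x d : is_derive f x d -> 0 < d ->
  exists e, 0 < e /\ forall t, x < t < x + e -> f x < f t.
Proof.
  intros H Hd. apply is_derive_Reals in H.
  destruct (H (d/2)) as [del Hdel]; [lra|].
  exists del; split; [apply cond_pos|].
  intros t Ht. specialize (Hdel (t - x)).
  replace (x + (t - x)) with t in Hdel by ring.
  assert (Hne : t - x <> 0) by lra.
  assert (Habs : Rabs (t - x) < del) by (rewrite Rabs_right; lra).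
  specialize (Hdel Hne Habs). apply Rabs_def2 in Hdel.
  destruct Hdel as [_ Hdel].
  assert (Hq : 0 < (f t - f x) / (t - x)) by lra.
  assert (0 < t - x) by lra.
  unfold Rdiv in Hq.
  assert (0 < (f t - f x)).
  { apply (Rmult_lt_reg_r (/ (t - x))). apply Rinv_0_lt_compat; lra. lra. }
  lra.
Qed.

Lemma barrier_strict f a b m : a <= b ->
  (forall t, a <= t <= b -> continuity_pt f t) ->
  m <= f a ->
  (forall t, a <= t <= b -> f t = m -> exists d, is_derive f t d /\ 0 < d) ->
  forall t, a <= t <= b -> m <= f t.
Proof.
  intros Hab Hc Ha Hd t Ht.
  destruct (Rle_dec m (f t)) as [|Hn]; auto. exfalso.
  destruct (last_time (fun x => - f x) a t (-m)) as [c [Hc1 [Hc2 Hc3]]]; try lra.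
  - intros x Hx. apply continuity_pt_opp, Hc; lra.
  - destruct (Hd c) as [d [Hd1 Hd2]]; [split; lra|lra|].
    destruct (pos_deriv_right f c d Hd1 Hd2) as [e [He He']].
    set (x := Rmin (c + e/2) t).
    assert (c < x <= t) by (unfold x; apply Rmin_case_strong; intros; lra).
    assert (f c < f x) by (apply He'; split; [lra|]; unfold x; apply Rmin_case_strong; intros; lra).
    specialize (Hc3 x H). lra.
Qed.

Lemma barrier_nonincr f df a b M : a <= b ->
  (forall t, a <= t <= b -> is_derive f t (df t)) ->
  f a <= M ->
  (forall t, a < t < b -> M < f t -> df t <= 0) ->
  forall t, a <= t <= b -> f t <= M.
Proof.
  intros Hab Hd Ha Hneg t Ht.
  destruct (Rle_dec (f t) M) as [|Hn]; auto. exfalso.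
  destruct (last_time f a t M) as [c [Hc1 [Hc2 Hc3]]]; try lra.
  - intros x Hx. apply (deriv_cont f x (df x)), Hd; lra.
  - destruct (MVT_cor2 f df c t) as [xi [Hxi1 Hxi2]]; [lra| |].
    + intros x Hx. apply is_derive_Reals, Hd; lra.
    + assert (df xi <= 0) by (apply Hneg; [lra| apply Hc3; lra]).
      assert (df xi * (t - c) <= 0) by (apply Rmult_le_0_r; lra). lra.
Qed.

Lemma cosZ x k : cos (x + 2 * IZR k * PI) = cos x.
Proof.
  destruct (Z_le_gt_dec 0 k) as [Hk|Hk].
  - rewrite <- (Z2Nat.id k) by lia. rewrite <- INR_IZR_INZ. apply cos_period.
  - replace k with (- Z.of_nat (Z.to_nat (- k)))%Z by lia.
    rewrite opp_IZR, <- INR_IZR_INZ.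
    rewrite <- (cos_period (x + 2 * - INR (Z.to_nat (- k)) * PI) (Z.to_nat (-k))).
    f_equal; ring.
Qed.

Lemma sinZ x k : sin (x + 2 * IZR k * PI) = sin x.
Proof.
  destruct (Z_le_gt_dec 0 k) as [Hk|Hk].
  - rewrite <- (Z2Nat.id k) by lia. rewrite <- INR_IZR_INZ. apply sin_period.
  - replace k with (- Z.of_nat (Z.to_nat (- k)))%Z by lia.
    rewrite opp_IZR, <- INR_IZR_INZ.
    rewrite <- (sin_period (x + 2 * - INR (Z.to_nat (- k)) * PI) (Z.to_nat (-k))).
    f_equal; ring.
Qed.

Lemma reduce x : exists k : Z, 0 <= x - 2 * IZR k * PI < 2 * PI.
Proof.
  pose proof PI_RGT_0.
  exists (Zfloor (x / (2 * PI))).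
  destruct (Zfloor_bound (x / (2 * PI))) as [H1 H2].
  set (z := IZR (Zfloor (x / (2 * PI)))) in *.
  assert (z * (2 * PI) <= x).
  { apply (Rmult_le_compat_r (2 * PI)) in H1; [|lra]. unfold Rdiv in H1.
    rewrite Rmult_assoc, Rinv_l, Rmult_1_r in H1 by lra. lra. }
  assert (x < (z + 1) * (2 * PI)).
  { apply (Rmult_lt_compat_r (2 * PI)) in H2; [|lra]. unfold Rdiv in H2.
    rewrite Rmult_assoc, Rinv_l, Rmult_1_r in H2 by lra. lra. }
  split; nra.
Qed.

Lemma sin_pos_arc x : 0 < sin x -> exists k : Z, 2 * IZR k * PI < x < 2 * IZR k * PI + PI.
Proof.
  intros H. destruct (reduce x) as [k Hk]. exists k.
  set (y := x - 2 * IZR k * PI) in *.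
  assert (sin y = sin x) by (unfold y; rewrite <- (sinZ _ k); f_equal; ring).
  destruct (Req_dec y 0) as [Hy|Hy]. { rewrite Hy, sin_0 in H0; lra. }
  destruct (Rlt_dec y PI). { unfold y in *; lra. }
  assert (sin y <= 0) by (apply sin_le_0; lra). lra.
Qed.

Lemma sin_neg_arc x : sin x < 0 -> exists k : Z, 2 * IZR k * PI - PI < x < 2 * IZR k * PI.
Proof.
  intros H. destruct (sin_pos_arc (- x)) as [k Hk].
  { rewrite sin_neg; lra. }
  exists (- k)%Z. rewrite opp_IZR. lra.
Qed.

Lemma cos_pos_arc x : 0 < cos x -> exists k : Z, 2 * IZR k * PI - PI/2 < x < 2 * IZR k * PI + PI/2.
Proof.
  intros H. destruct (reduce x) as [k Hk].
  set (y := x - 2 * IZR k * PI) in *.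
  assert (cos y = cos x) by (unfold y; rewrite <- (cosZ _ k); f_equal; ring).
  destruct (Rlt_dec y (PI/2)). { exists k; unfold y in *; lra. }
  destruct (Rle_dec y (3 * (PI/2))).
  { assert (cos y <= 0) by (apply cos_le_0; lra). lra. }
  exists (k + 1)%Z. rewrite plus_IZR. unfold y in *. lra.
Qed.

Lemma cos_neg_arc x : cos x < 0 -> exists k : Z, 2 * IZR k * PI + PI/2 < x < 2 * IZR k * PI + 3 * (PI/2).
Proof.
  intros H. destruct (reduce x) as [k Hk]. exists k.
  set (y := x - 2 * IZR k * PI) in *.
  assert (cos y = cos x) by (unfold y; rewrite <- (cosZ _ k); f_equal; ring).
  destruct (Rle_dec y (PI/2)).
  { assert (0 <= cos y) by (apply cos_ge_0; lra). lra. }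
  destruct (Rlt_dec y (3 * (PI/2))). { unfold y in *; lra. }
  assert (0 <= cos y) by (apply cos_ge_0_3PI2; lra). lra.
Qed.

Lemma cos_gtm1_arc x : -1 < cos x -> exists k : Z, 2 * IZR k * PI - PI < x < 2 * IZR k * PI + PI.
Proof.
  intros H. destruct (reduce x) as [k Hk].
  set (y := x - 2 * IZR k * PI) in *.
  assert (cos y = cos x) by (unfold y; rewrite <- (cosZ _ k); f_equal; ring).
  destruct (Rlt_dec y PI). { exists k; unfold y in *; lra. }
  destruct (Req_dec y PI) as [Hy|Hy]. { rewrite Hy, cos_PI in H0. lra. }
  exists (k + 1)%Z. rewrite plus_IZR. unfold y in *. lra.
Qed.

Lemma stay (f : R -> R) a b lo hi : a <= b ->
  (forall t, a <= t <= b -> continuity_pt f t) ->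
  lo < f a < hi ->
  (forall t, a <= t <= b -> f t <> lo /\ f t <> hi) ->
  forall t, a <= t <= b -> lo < f t < hi.
Proof.
  intros Hab Hc Ha Hne t Ht. split.
  - destruct (Rlt_dec lo (f t)) as [|Hn]; auto. exfalso.
    destruct (first_time (fun x => - f x) a t (- lo)) as [c [Hc1 [Hc2 _]]]; try lra.
    + intros x Hx; apply continuity_pt_opp, Hc; lra.
    + apply (proj1 (Hne c ltac:(lra))). lra.
  - destruct (Rlt_dec (f t) hi) as [|Hn]; auto. exfalso.
    destruct (first_time f a t hi) as [c [Hc1 [Hc2 _]]]; try lra.
    + intros x Hx; apply Hc; lra.
    + apply (proj2 (Hne c ltac:(lra))). lra.
Qed.

Lemma sin_kPI k : sin (IZR k * PI) = 0.
Proof. apply sin_eq_0_1. exists k; auto. Qed.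

Lemma cos_oddPI2 k : cos (IZR k * PI + PI/2) = 0.
Proof. apply cos_eq_0_1. exists k; auto. Qed.

Lemma cos_oddPI k : cos (2 * IZR k * PI + PI) = -1.
Proof. replace (2 * IZR k * PI + PI) with (PI + 2 * IZR k * PI) by ring. rewrite cosZ; apply cos_PI. Qed.

Lemma cos_ge_min a b x : -(PI/2) < a < PI/2 -> -(PI/2) < b < PI/2 -> b <= x <= a ->
  Rmin (cos a) (cos b) <= cos x.
Proof.
  intros Ha Hb Hx. pose proof PI_RGT_0.
  destruct (Rle_dec 0 x).
  - eapply Rle_trans; [apply Rmin_l|]. apply cos_decr_1; lra.
  - eapply Rle_trans; [apply Rmin_r|]. rewrite <- (cos_neg x), <- (cos_neg b).
    apply cos_decr_1; lra.
Qed.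

Lemma sin_diff_bounds a b c0 : -(PI/2) < a < PI/2 -> -(PI/2) < b < PI/2 ->
  c0 <= cos a -> c0 <= cos b -> b <= a ->
  c0 * (a - b) <= sin a - sin b <= a - b.
Proof.
  intros Ha Hb Hca Hcb Hba.
  destruct (Req_dec a b) as [->|Hne]. { split; lra. }
  destruct (MVT_cor2 sin cos b a) as [x [Hx1 Hx2]]; [lra| intros; apply derivable_pt_lim_sin |].
  rewrite Hx1. split.
  - apply Rmult_le_compat_r; [lra|]. pose proof (cos_ge_min a b x Ha Hb ltac:(lra)).
    revert H; apply Rmin_case_strong; intros; lra.
  - pose proof (COS_bound x). assert (cos x * (a - b) <= 1 * (a - b)) by (apply Rmult_le_compat_r; lra). lra.
Qed.

Lemma der_mul (f g : R -> R) x df dg : is_derive f x df -> is_derive g x dg ->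
  is_derive (fun y => f y * g y) x (df * g x + f x * dg).
Proof.
  intros H1 H2. apply is_derive_Reals in H1, H2. apply is_derive_Reals.
  apply (derivable_pt_lim_mult f g x df dg H1 H2).
Qed.
Lemma der_exp_lin lam t1 x : is_derive (fun y => exp (lam * (y - t1))) x (lam * exp (lam * (x - t1))).
Proof. auto_derive; auto. unfold Rminus; ring. Qed.
Lemma der_minc (f : R -> R) c x df : is_derive f x df -> is_derive (fun y => f y - c) x df.
Proof.
  intros H. apply is_derive_Reals in H. apply is_derive_Reals.
  replace df with (df - 0) by ring.
  apply (derivable_pt_lim_minus f (fun _ => c)); auto. apply derivable_pt_lim_const.
Qed.

Lemma exp_bound (D dD : R -> R) t1 lam c M :
  (forall t, t1 <= t -> is_derive D t (dD t)) -> D t1 <= c + M -> 0 <= M ->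
  (forall t, t1 <= t -> c < D t -> dD t <= - lam * (D t - c)) ->
  forall t, t1 <= t -> D t <= c + M * exp (- lam * (t - t1)).
Proof.
  intros Hd H1 HM Hc t Ht.
  set (h := fun x => (D x - c) * exp (lam * (x - t1))).
  set (dh := fun x => (dD x + lam * (D x - c)) * exp (lam * (x - t1))).
  assert (Hh : forall x, t1 <= x <= t -> is_derive h x (dh x)).
  { intros x Hx. unfold h, dh.
    replace ((dD x + lam * (D x - c)) * exp (lam * (x - t1)))
      with (dD x * exp (lam * (x - t1)) + (D x - c) * (lam * exp (lam * (x - t1)))) by ring.
    apply (der_mul (fun y => D y - c) (fun y => exp (lam * (y - t1)))); [apply der_minc, Hd; lra| apply der_exp_lin]. }
  assert (h t <= M).
  { apply (barrier_nonincr h dh t1 t M); auto; try lra.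
    - unfold h. replace (t1 - t1) with 0 by ring. rewrite Rmult_0_r, exp_0. lra.
    - intros x Hx Hhx. unfold dh. unfold h in Hhx.
      pose proof (exp_pos (lam * (x - t1))).
      assert (c < D x).
      { destruct (Rlt_dec c (D x)); auto. assert ((D x - c) * exp (lam * (x - t1)) <= 0) by (apply Rmult_le_0_r; lra). lra. }
      pose proof (Hc x ltac:(lra) H0).
      apply Rmult_le_0_r; lra. }
  unfold h in H.
  assert (Hee : exp (lam * (t - t1)) * exp (- lam * (t - t1)) = 1).
  { rewrite <- exp_plus. replace (lam * (t - t1) + - lam * (t - t1)) with 0 by ring. apply exp_0. }
  pose proof (exp_pos (- lam * (t - t1))).
  apply (Rmult_le_compat_r (exp (- lam * (t - t1)))) in H; [|lra].
  rewrite Rmult_assoc, Hee in H. lra.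
Qed.

Lemma stay_back (f : R -> R) a b lo hi : a <= b ->
  (forall t, a <= t <= b -> continuity_pt f t) ->
  lo < f b < hi ->
  (forall t, a <= t <= b -> f t <> lo /\ f t <> hi) ->
  forall t, a <= t <= b -> lo < f t < hi.
Proof.
  intros Hab Hc Hb Hne t Ht. split.
  - destruct (Rlt_dec lo (f t)) as [|Hn]; auto. exfalso.
    destruct (last_time f t b lo) as [c [Hc1 [Hc2 _]]]; try lra.
    + intros x Hx; apply Hc; lra.
    + apply (proj1 (Hne c ltac:(lra))). lra.
  - destruct (Rlt_dec (f t) hi) as [|Hn]; auto. exfalso.
    destruct (last_time (fun x => - f x) t b (- hi)) as [c [Hc1 [Hc2 _]]]; try lra.
    + intros x Hx; apply continuity_pt_opp, Hc; lra.
    + apply (proj2 (Hne c ltac:(lra))). lra.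
Qed.

Lemma cos_shift_k x k : cos (x - 2 * IZR k * PI) = cos x.
Proof. rewrite <- (cosZ _ k). f_equal; ring. Qed.

Lemma cos_pos_in x k : 2 * IZR k * PI - PI < x < 2 * IZR k * PI + PI -> 0 < cos x ->
  2 * IZR k * PI - PI/2 < x < 2 * IZR k * PI + PI/2.
Proof.
  intros Hx Hc. rewrite <- (cos_shift_k x k) in Hc.
  set (y := x - 2 * IZR k * PI) in *.
  split.
  - destruct (Rlt_dec (- (PI/2)) y); [unfold y in *; lra|].
    rewrite <- cos_neg in Hc. assert (cos (- y) <= 0) by (apply cos_le_0; unfold y in *; lra). lra.
  - destruct (Rlt_dec y (PI/2)); [unfold y in *; lra|].
    assert (cos y <= 0) by (apply cos_le_0; unfold y in *; lra). lra.
Qed.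

Lemma range_core (f : R -> R) (c tst T : R) (k : Z) :
  c < 0 -> 0 <= tst <= T ->
  (forall t, 0 <= t -> continuity_pt f t) ->
  (forall t, 0 <= t < tst -> cos (f t) < c) ->
  (forall t, tst <= t -> c <= cos (f t)) ->
  (forall t, T <= t -> 0 < cos (f t)) ->
  (forall t, tst <= t -> 2 * IZR k * PI - PI < f t < 2 * IZR k * PI + PI) ->
  (forall t, 0 <= t <= tst -> 2 * IZR k * PI + PI/2 < f t < 2 * IZR k * PI + 3 * (PI/2)) ->
  exists a b, b - a < 2 * PI /\ forall t, 0 <= t -> a <= f t <= b.
Proof.
  intros Hc Hts Hcont Hbef Haft Htail Hinaft Hinbef.
  pose proof PI_RGT_0.
  set (K := 2 * IZR k * PI) in *.
  destruct (continuity_ab_maj f 0 tst ltac:(lra)) as [tm [Htm2 Htm1]].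
  { intros; apply Hcont; lra. }
  destruct (continuity_ab_min f tst T ltac:(lra)) as [tn [Htn2 Htn1]].
  { intros; apply Hcont; lra. }
  assert (Htl : forall t, T <= t -> K - PI/2 < f t < K + PI/2).
  { intros t Ht. apply cos_pos_in; [apply Hinaft; lra| apply Htail; auto]. }
  exists (Rmin (f tn) (K - PI/2)), (Rmax (f tm) (K + PI)). split.
  - pose proof (Hinaft tn ltac:(lra)). pose proof (Hinbef tm ltac:(lra)).
    destruct (Rle_dec (f tm) (K + PI)).
    + rewrite Rmax_right by lra. apply Rmin_case_strong; intros; lra.
    + rewrite Rmax_left by lra.
      assert (Htm3 : tm < tst).
      { destruct (Rle_lt_or_eq_dec _ _ (proj2 Htm1)); auto. subst. pose proof (Hinaft tst ltac:(lra)). lra. }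
      apply Rmin_case_strong; intros Hmin; [|lra].
      destruct (Rle_dec (K - PI/2) (f tn)); [lra|].
      assert (cos (f tm) < cos (f tn)).
      { pose proof (Hbef tm ltac:(lra)). pose proof (Haft tn ltac:(lra)). lra. }
      rewrite <- (cos_shift_k (f tm) k), <- (cos_shift_k (f tn) (k - 1)) in H2.
      rewrite minus_IZR in H2. fold K in H2.
      assert (f tm - K < f tn - 2 * (IZR k - 1) * PI).
      { apply cos_increasing_0; unfold K in *; try lra. }
      unfold K in *; lra.
  - intros t Ht.
    destruct (Rle_dec t tst).
    + pose proof (Htm2 t ltac:(lra)). pose proof (Hinbef t ltac:(lra)). split.
      * apply Rmin_case_strong; intros; [pose proof (Hinaft tn ltac:(lra)); lra| lra].
      * eapply Rle_trans; [apply H0| apply Rmax_l].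
    + destruct (Rle_dec t T).
      * pose proof (Htn2 t ltac:(lra)). pose proof (Hinaft t ltac:(lra)). split.
        -- eapply Rle_trans; [apply Rmin_l| apply H0].
        -- apply Rmax_case_strong; intros; lra.
      * pose proof (Htl t ltac:(lra)). split.
        -- eapply Rle_trans; [apply Rmin_r| lra].
        -- apply Rmax_case_strong; intros; [pose proof (Hinbef tm ltac:(lra)); lra| lra].
Qed.

Lemma lip_deriv (f df : R -> R) a b L :
  a <= b -> (forall u, a <= u <= b -> is_derive f u (df u)) ->
  (forall u, a <= u <= b -> Rabs (df u) <= L) ->
  Rabs (f b - f a) <= L * (b - a).
Proof.
  intros Hab Hd HL. destruct (Req_dec a b) as [->|Hne].
  - rewrite !Rminus_diag, Rabs_R0, Rmult_0_r; lra.
  - destruct (MVT_cor2 f df a b) as [c [Hc1 Hc2]]; [lra| intros; apply is_derive_Reals, Hd; lra|].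
    rewrite Hc1, Rabs_mult, (Rabs_right (b - a)) by lra.
    apply Rmult_le_compat_r; [lra| apply HL; lra].
Qed.

Lemma sin_lip x y : Rabs (sin x - sin y) <= Rabs (x - y).
Proof.
  destruct (Rle_dec y x).
  - rewrite (Rabs_right (x - y)) by lra. rewrite <- (Rmult_1_l (x - y)).
    apply (lip_deriv sin cos y x 1); auto.
    + intros; apply is_derive_Reals, derivable_pt_lim_sin.
    + intros; apply Rabs_le; pose proof (COS_bound u); lra.
  - rewrite Rabs_minus_sym, (Rabs_minus_sym x). rewrite (Rabs_right (y - x)) by lra.
    rewrite <- (Rmult_1_l (y - x)).
    apply (lip_deriv sin cos x y 1); try lra.
    + intros; apply is_derive_Reals, derivable_pt_lim_sin.
    + intros; apply Rabs_le; pose proof (COS_bound u); lra.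
Qed.

Lemma cos_lip x y : Rabs (cos x - cos y) <= Rabs (x - y).
Proof.
  destruct (Rle_dec y x).
  - rewrite (Rabs_right (x - y)) by lra. rewrite <- (Rmult_1_l (x - y)).
    apply (lip_deriv cos (fun u => - sin u) y x 1); auto.
    + intros; apply is_derive_Reals, derivable_pt_lim_cos.
    + intros; apply Rabs_le; pose proof (SIN_bound u); lra.
  - rewrite Rabs_minus_sym, (Rabs_minus_sym x). rewrite (Rabs_right (y - x)) by lra.
    rewrite <- (Rmult_1_l (y - x)).
    apply (lip_deriv cos (fun u => - sin u) x y 1); try lra.
    + intros; apply is_derive_Reals, derivable_pt_lim_cos.
    + intros; apply Rabs_le; pose proof (SIN_bound u); lra.
Qed.

Definition sumL (L : list (R * R)) (f : R -> R) : R :=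
  fold_right (fun ca acc => fst ca * f (snd ca) + acc) 0 L.

Definition gpow (m : nat) (a v : R) : R := / (sqrt (v - a)) ^ (2 * m + 1).

Lemma sumL_scal L f k : sumL L (fun a => k * f a) = k * sumL L f.
Proof. induction L; simpl; [ring|]. rewrite IHL; ring. Qed.

Lemma sumL_ext L f g : (forall ca, In ca L -> f (snd ca) = g (snd ca)) -> sumL L f = sumL L g.
Proof.
  induction L; simpl; intros H; auto. rewrite H by auto. rewrite IHL; auto.
Qed.

Lemma der_sqrt_shift a v : a < v -> is_derive (fun x => sqrt (x - a)) v (/ (2 * sqrt (v - a))).
Proof.
  intros H. replace (/ (2 * sqrt (v - a))) with (1 / (2 * sqrt (v - a))) by (field; apply Rgt_not_eq, sqrt_lt_R0; lra).
  apply (is_derive_sqrt (fun x => x - a)); [|lra].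
  apply is_derive_Reals. replace 1 with (1 - 0) by ring.
  apply (derivable_pt_lim_minus (fun x => x) (fun _ => a)); [apply derivable_pt_lim_id| apply derivable_pt_lim_const].
Qed.

Lemma der_gpow m a v : a < v -> is_derive (gpow m a) v (- (2 * INR m + 1) / 2 * gpow (S m) a v).
Proof.
  intros H. unfold gpow.
  assert (Hw : 0 < sqrt (v - a)) by (apply sqrt_lt_R0; lra).
  set (w := sqrt (v - a)) in *.
  pose proof (is_derive_pow (fun x => sqrt (x - a)) (2 * m + 1) v _ (der_sqrt_shift a v H)) as Hp.
  pose proof (is_derive_inv _ v _ Hp) as Hi.
  assert (Hne : w ^ (2 * m + 1) <> 0) by (apply pow_nonzero; lra).
  specialize (Hi Hne).
  assert (Heq : - (2 * INR m + 1) / 2 * / w ^ (2 * S m + 1) =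
     - (INR (2 * m + 1) * / (2 * w) * w ^ Init.Nat.pred (2 * m + 1)) / (w ^ (2 * m + 1)) ^ 2).
  { replace (Init.Nat.pred (2 * m + 1)) with (2 * m)%nat by lia.
    replace (2 * S m + 1)%nat with (2 * m + 3)%nat by lia.
    rewrite !pow_add. rewrite plus_INR, mult_INR. simpl.
    assert (HP : w ^ (2 * m) <> 0) by (apply pow_nonzero; lra).
    field. split; [lra| apply pow_nonzero; lra]. }
  rewrite Heq. exact Hi.
Qed.

Lemma der_sumL L (F : R -> R -> R) (dF : R -> R) v :
  (forall ca, In ca L -> is_derive (F (snd ca)) v (dF (snd ca))) ->
  is_derive (fun x => sumL L (fun a => F a x)) v (sumL L dF).
Proof.
  induction L as [|ca L IH]; intros H; simpl.
  - apply (is_derive_const (K:=R_AbsRing) (V:=R_NormedModule) 0 v).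
  - apply is_derive_Reals.
    apply (derivable_pt_lim_plus (fun x => fst ca * F (snd ca) x) (fun x => sumL L (fun a => F a x))).
    + apply (derivable_pt_lim_scal (F (snd ca))). apply is_derive_Reals, H; simpl; auto.
    + apply is_derive_Reals, IH. intros; apply H; simpl; auto.
Qed.

Lemma eq_deriv (f g : R -> R) p q v l1 l2 : (forall x, p < x < q -> f x = g x) -> p < v < q ->
  is_derive f v l1 -> is_derive g v l2 -> l1 = l2.
Proof.
  intros Heq Hv H1 H2.
  assert (Hloc : locally v (fun t => f t = g t)).
  { assert (He : 0 < Rmin (v - p) (q - v)) by (apply Rmin_case_strong; intros; lra).
    exists (mkposreal _ He). intros y Hy. apply Heq.
    change (Rabs (y - v) < Rmin (v - p) (q - v)) in Hy.
    apply Rabs_def2 in Hy. destruct Hy as [Hy1 Hy2].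
    revert Hy1 Hy2; apply Rmin_case_strong; intros; lra. }
  pose proof (is_derive_ext_loc f g v l1 Hloc H1).
  apply is_derive_unique in H. apply is_derive_unique in H2. congruence.
Qed.

Lemma S_succ_zero L p q m C : p < q -> (forall ca, In ca L -> snd ca < p) ->
  (forall v, p < v < q -> sumL L (fun a => gpow m a v) = C) ->
  forall v, p < v < q -> sumL L (fun a => gpow (S m) a v) = 0.
Proof.
  intros Hpq HL HC v Hv.
  assert (Hd : is_derive (fun x => sumL L (fun a => gpow m a x)) v
                 (sumL L (fun a => - (2 * INR m + 1) / 2 * gpow (S m) a v))).
  { apply (der_sumL L (gpow m) (fun a => - (2 * INR m + 1) / 2 * gpow (S m) a v)).
    intros ca Hca. apply der_gpow. pose proof (HL ca Hca); lra. }
  pose proof (eq_deriv _ (fun _ => C) p q v _ 0 HC Hv Hd (is_derive_const (K:=R_AbsRing) (V:=R_NormedModule) C v)).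
  rewrite sumL_scal in H.
  assert (0 < 2 * INR m + 1) by (pose proof (pos_INR m); lra).
  apply Rmult_integral in H. destruct H as [H|H]; auto.
  exfalso. assert (- (2 * INR m + 1) / 2 < 0) by lra. lra.
Qed.

Lemma S0_const L p q Nr : p < q -> (forall ca, In ca L -> snd ca < p) ->
  (forall v, p < v < q -> sumL L (fun a => sqrt (v - a)) = Nr * v) ->
  forall v, p < v < q -> sumL L (fun a => gpow 0 a v) = 2 * Nr.
Proof.
  intros Hpq HL HC v Hv.
  assert (Hd : is_derive (fun x => sumL L (fun a => sqrt (x - a))) v
                 (sumL L (fun a => / 2 * gpow 0 a v))).
  { apply (der_sumL L (fun a x => sqrt (x - a)) (fun a => / 2 * gpow 0 a v)).
    intros ca Hca. pose proof (HL ca Hca).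
    replace (/ 2 * gpow 0 (snd ca) v) with (/ (2 * sqrt (v - snd ca))).
    - apply der_sqrt_shift; lra.
    - unfold gpow. simpl. field. apply Rgt_not_eq, sqrt_lt_R0; lra. }
  assert (Hd2 : is_derive (fun x => Nr * x) v Nr).
  { auto_derive; auto. ring. }
  pose proof (eq_deriv _ _ p q v _ _ HC Hv Hd Hd2).
  rewrite sumL_scal in H. lra.
Qed.

Lemma S_all_zero L p q Nr : p < q -> (forall ca, In ca L -> snd ca < p) ->
  (forall v, p < v < q -> sumL L (fun a => sqrt (v - a)) = Nr * v) ->
  forall m v, p < v < q -> sumL L (fun a => gpow (S m) a v) = 0.
Proof.
  intros Hpq HL HC m. induction m.
  - apply (S_succ_zero L p q 0 (2 * Nr)); auto. apply (S0_const L p q Nr); auto.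
  - apply (S_succ_zero L p q (S m) 0); auto.
Qed.

Definition Lneq (L : list (R * R)) (s : R) :=
  filter (fun ca => if Req_dec_T (snd ca) s then false else true) L.

Lemma split_sumL L s f :
  sumL L f = sumL (Lneq L s) f + sumL L (fun a => if Req_dec_T a s then 1 else 0) * f s.
Proof.
  induction L as [|[c a] L IH]; simpl; [ring|].
  destruct (Req_dec_T a s) as [->|Hne]; simpl; rewrite IH; ring.
Qed.

Lemma Lneq_In L s ca : In ca (Lneq L s) -> In ca L.
Proof. unfold Lneq. intros H. apply filter_In in H. tauto. Qed.

Lemma Lneq_length L s : (exists ca, In ca L /\ snd ca = s) -> (length (Lneq L s) < length L)%nat.
Proof.
  induction L as [|[c a] L IH]; intros [ca [Hin Hs]]; [destruct Hin|].
  unfold Lneq; simpl. destruct (Req_dec_T a s) as [Ha|Ha].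
  - simpl. pose proof (filter_length_le (fun ca => if Req_dec_T (snd ca) s then false else true) L). unfold Lneq in *. lia.
  - simpl. destruct Hin as [Heq|Hin]; [subst; simpl in Ha; congruence|].
    specialize (IH (ex_intro _ ca (conj Hin Hs))). unfold Lneq in IH. lia.
Qed.

Definition amax (l : list (R * R)) (d : R) := fold_right (fun ca m => Rmax (snd ca) m) d l.

Lemma amax_ge l d : d <= amax l d /\ forall ca, In ca l -> snd ca <= amax l d.
Proof.
  induction l as [|ca l IH]; simpl; split.
  - lra.
  - intros ? [].
  - eapply Rle_trans; [apply IH| apply Rmax_r].
  - intros x [->|Hx]; [apply Rmax_l|]. eapply Rle_trans; [apply IH; auto| apply Rmax_r].
Qed.

Lemma amax_in l d : amax l d = d \/ exists ca, In ca l /\ snd ca = amax l d.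
Proof.
  induction l as [|ca l IH]; simpl; [left; auto|].
  apply Rmax_case_strong; intros.
  - right. exists ca; split; auto.
  - destruct IH as [IH|[x [Hx Hx']]]; [left; auto| right; exists x; split; auto].
Qed.

Lemma lim_sumL L (h : nat -> R -> R) (lim : R -> R) :
  (forall ca, In ca L -> is_lim_seq (fun m => h m (snd ca)) (lim (snd ca))) ->
  is_lim_seq (fun m => sumL L (h m)) (sumL L lim).
Proof.
  induction L as [|ca L IH]; intros H; simpl.
  - apply is_lim_seq_const.
  - apply is_lim_seq_plus'.
    + apply (is_lim_seq_scal_l (fun m => h m (snd ca)) (fst ca) (lim (snd ca))). apply H; simpl; auto.
    + apply IH; intros; apply H; simpl; auto.
Qed.

Lemma null_lemma n : forall L p q, (length L <= n)%nat -> p < q -> (forall ca, In ca L -> snd ca < p) ->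
  (forall m v, p < v < q -> sumL L (fun a => gpow (S m) a v) = 0) ->
  forall v, p < v < q -> sumL L (fun a => sqrt (v - a)) = 0.
Proof.
  induction n as [|n IH]; intros L p q Hlen Hpq HL HS v Hv.
  - destruct L; [reflexivity| simpl in Hlen; lia].
  - destruct L as [|x l]; [reflexivity|].
    set (L := x :: l) in *.
    set (s := amax l (snd x)).
    assert (Hsmax : forall ca, In ca L -> snd ca <= s).
    { intros ca Hin. unfold L in Hin. destruct Hin as [Hx | Hca].
      - rewrite <- Hx. apply (proj1 (amax_ge l (snd x))).
      - apply (proj2 (amax_ge l (snd x))); auto. }
    assert (Hsin : exists ca, In ca L /\ snd ca = s).
    { destruct (amax_in l (snd x)) as [H|[ca [H1 H2]]]; [exists x; split; [left; auto| auto]| exists ca; split; [right; auto| auto]]. }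
    assert (Hsp : s < p) by (destruct Hsin as [ca [H1 H2]]; rewrite <- H2; apply HL; auto).
    set (Ceq := sumL L (fun a => if Req_dec_T a s then 1 else 0)).
    set (v0 := (p + q) / 2).
    assert (Hv0 : p < v0 < q) by (unfold v0; lra).
    set (w0 := sqrt (v0 - s)).
    assert (Hw0 : 0 < w0) by (apply sqrt_lt_R0; lra).
    assert (Hlim : is_lim_seq (fun m => sumL L (fun a => (w0 / sqrt (v0 - a)) ^ (2 * S m + 1))) Ceq).
    { apply (lim_sumL L (fun m a => (w0 / sqrt (v0 - a)) ^ (2 * S m + 1)) (fun a => if Req_dec_T a s then 1 else 0)).
      intros ca Hca. destruct (Req_dec_T (snd ca) s) as [Hs|Hs].
      - rewrite Hs. eapply is_lim_seq_ext; [| apply is_lim_seq_const].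
        intros m. unfold w0. rewrite Rdiv_diag by (apply Rgt_not_eq, Hw0). rewrite pow1. reflexivity.
      - assert (Hlt : snd ca < s) by (pose proof (Hsmax ca Hca); lra).
        assert (Hq1 : 0 < sqrt (v0 - snd ca)) by (apply sqrt_lt_R0; pose proof (HL ca Hca); lra).
        set (r := w0 / sqrt (v0 - snd ca)).
        assert (Hr0 : 0 < r) by (unfold r; apply Rdiv_lt_0_compat; lra).
        assert (Hr1 : r < 1).
        { unfold r. apply (Rmult_lt_reg_r (sqrt (v0 - snd ca))); auto. unfold Rdiv.
          rewrite Rmult_assoc, Rinv_l, Rmult_1_r, Rmult_1_l by lra. unfold w0. apply sqrt_lt_1; lra. }
        eapply is_lim_seq_ext.
        + intros m. symmetry. replace (2 * S m + 1)%nat with (3 + 2 * m)%nat by lia.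
          rewrite pow_add, pow_mult. reflexivity.
        + replace 0 with (r ^ 3 * 0) by ring.
          apply (is_lim_seq_scal_l (fun m => (r ^ 2) ^ m) (r ^ 3) 0).
          apply is_lim_seq_geom. rewrite Rabs_right by (apply Rle_ge, pow_le; lra).
          simpl. nra. }
    assert (Hzero : forall m, sumL L (fun a => (w0 / sqrt (v0 - a)) ^ (2 * S m + 1)) = 0).
    { intros m. rewrite <- (Rmult_0_r (w0 ^ (2 * S m + 1))). rewrite <- (HS m v0 Hv0).
      rewrite <- sumL_scal. apply sumL_ext. intros ca Hca. unfold gpow.
      assert (0 < sqrt (v0 - snd ca)) by (apply sqrt_lt_R0; pose proof (HL ca Hca); lra).
      unfold Rdiv. rewrite Rpow_mult_distr, pow_inv. reflexivity. }
    assert (HC0 : Ceq = 0).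
    { assert (is_lim_seq (fun m => sumL L (fun a => (w0 / sqrt (v0 - a)) ^ (2 * S m + 1))) 0).
      { eapply is_lim_seq_ext; [| apply is_lim_seq_const]. intros m. rewrite Hzero; auto. }
      apply is_lim_seq_unique in H. apply is_lim_seq_unique in Hlim. rewrite Hlim in H. injection H; auto. }
    set (L' := Lneq L s).
    assert (HL' : forall ca, In ca L' -> snd ca < p) by (intros; apply HL, (Lneq_In L s); auto).
    assert (Hlen' : (length L' <= n)%nat) by (pose proof (Lneq_length L s Hsin); unfold L' in *; simpl in *; lia).
    assert (HS' : forall m v, p < v < q -> sumL L' (fun a => gpow (S m) a v) = 0).
    { intros m v' Hv'. pose proof (split_sumL L s (fun a => gpow (S m) a v')).
      fold Ceq in H. rewrite HC0, (HS m v' Hv') in H. fold L' in H. lra. }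
    pose proof (IH L' p q Hlen' Hpq HL' HS' v Hv).
    rewrite (split_sumL L s). fold Ceq. fold L'. rewrite H, HC0. ring.
Qed.

Lemma no_interval L Nr p q : 0 <= p -> p < q -> 0 < Nr -> (forall ca, In ca L -> snd ca < p) ->
  (forall v, p < v < q -> sumL L (fun a => sqrt (v - a)) = Nr * v) -> False.
Proof.
  intros Hp Hpq HN HL HC.
  pose proof (S_all_zero L p q Nr Hpq HL HC) as HS.
  pose proof (null_lemma (length L) L p q (le_n _) Hpq HL HS ((p + q) / 2) ltac:(lra)).
  rewrite HC in H by lra. assert (0 < Nr * ((p + q) / 2)) by (apply Rmult_lt_0_compat; lra). lra.
Qed.

Lemma lim_of_eps (f : R -> R) (L : R) :
  (forall eps, 0 < eps -> exists M, forall t, M <= t -> Rabs (f t - L) < eps) ->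
  is_lim f p_infty L.
Proof.
  intros H. apply is_lim_spec. intros eps. destruct (H eps (cond_pos eps)) as [M HM].
  exists M. intros t Ht. apply HM; lra.
Qed.

Lemma eps_of_lim (f : R -> R) (L : R) : is_lim f p_infty L ->
  forall eps, 0 < eps -> exists M, forall t, M <= t -> Rabs (f t - L) < eps.
Proof.
  intros H eps He. apply is_lim_spec in H. destruct (H (mkposreal _ He)) as [M HM].
  exists (M + 1). intros t Ht. apply HM; lra.
Qed.

Lemma lim_cont_comp (f g : R -> R) (L : R) : is_lim f p_infty L -> continuity_pt g L ->
  is_lim (fun t => g (f t)) p_infty (g L).
Proof.
  intros Hf Hg. apply lim_of_eps. intros eps He.
  destruct (cont_eps g L Hg eps He) as [d [Hd Hd']].
  destruct (eps_of_lim f L Hf d Hd) as [M HM]. exists M. intros t Ht. apply Hd'. apply HM; auto.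
Qed.

Lemma lim_ext_tail (f g : R -> R) (L : R) M0 : (forall t, M0 <= t -> f t = g t) ->
  is_lim f p_infty L -> is_lim g p_infty L.
Proof.
  intros Heq Hf. apply lim_of_eps. intros eps He.
  destruct (eps_of_lim f L Hf eps He) as [M HM]. exists (Rmax M M0). intros t Ht.
  rewrite <- Heq by (eapply Rle_trans; [apply Rmax_r| eauto]). apply HM.
  eapply Rle_trans; [apply Rmax_l| eauto].
Qed.

Lemma lim_unique_R (f : R -> R) (L1 L2 : R) : is_lim f p_infty L1 -> is_lim f p_infty L2 -> L1 = L2.
Proof.
  intros H1 H2. apply is_lim_unique in H1. apply is_lim_unique in H2. rewrite H1 in H2. injection H2; auto.
Qed.

Lemma lim_const_R (c : R) : is_lim (fun _ => c) p_infty c.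
Proof. apply lim_of_eps. intros eps He. exists 0. intros. rewrite Rminus_diag, Rabs_R0; lra. Qed.

Lemma lim_minus_R f g (a b : R) : is_lim f p_infty a -> is_lim g p_infty b -> is_lim (fun t => f t - g t) p_infty (a - b).
Proof.
  intros Hf Hg. apply lim_of_eps. intros eps He.
  destruct (eps_of_lim f a Hf (eps/2)) as [M1 H1]; [lra|].
  destruct (eps_of_lim g b Hg (eps/2)) as [M2 H2]; [lra|].
  exists (Rmax M1 M2). intros t Ht.
  specialize (H1 t (Rle_trans _ _ _ (Rmax_l _ _) Ht)). specialize (H2 t (Rle_trans _ _ _ (Rmax_r _ _) Ht)).
  replace (f t - g t - (a - b)) with ((f t - a) - (g t - b)) by ring.
  eapply Rle_lt_trans; [apply Rabs_triang|]. rewrite Rabs_Ropp. lra.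
Qed.

Lemma lim_mult_R f g (a b : R) : is_lim f p_infty a -> is_lim g p_infty b -> is_lim (fun t => f t * g t) p_infty (a * b).
Proof.
  intros Hf Hg. pose proof (is_lim_mult f g p_infty a b Hf Hg I). simpl in H. auto.
Qed.

Lemma lim_inv_R f (a : R) : a <> 0 -> is_lim f p_infty a -> is_lim (fun t => / f t) p_infty (/ a).
Proof.
  intros Ha Hf. pose proof (is_lim_inv f p_infty a Hf). simpl in H. apply H. intro Heq; injection Heq; auto.
Qed.

Lemma h_cont w c : c <> 0 -> (w / c) ^ 2 < 1 -> continuity_pt (fun y => sqrt (1 - ((w - y) / c) ^ 2)) 0.
Proof.
  intros Hc Hw. apply continuity_pt_filterlim.
  apply (ex_derive_continuous (fun y => sqrt (1 - ((w - y) / c) ^ 2)) 0).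
  auto_derive. match goal with |- 0 < 1 + - ?X => replace X with ((w / c) ^ 2) by (unfold Rdiv; ring) end. lra.
Qed.

Lemma asin_cont x : -1 < x < 1 -> continuity_pt asin x.
Proof. intros H. apply derivable_continuous_pt, derivable_pt_asin; auto. Qed.

Lemma cos_cont x : continuity_pt cos x.
Proof. apply derivable_continuous_pt, derivable_pt_cos. Qed.

Definition sumL2 := fun (L : list (R * R)) (f : R -> R) =>
  fold_right (fun ca acc => fst ca * f (snd ca) + acc) 0 L.

Lemma sumL_app l1 l2 f : sumL (l1 ++ l2) f = sumL l1 f + sumL l2 f.
Proof. induction l1; simpl; [ring|]. rewrite IHl1; ring. Qed.

Lemma sumL_seq (c a : nat -> R) f n :
  sumL (map (fun i => (c i, a i)) (seq 0 n)) f = Defs.sumN n (fun i => c i * f (a i)).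
Proof.
  induction n; [reflexivity|].
  rewrite seq_S, map_app, sumL_app, IHn. simpl. ring.
Qed.

Lemma lim_plus_const f (a c : R) : is_lim f p_infty a -> is_lim (fun t => f t + c) p_infty (a + c).
Proof.
  intros Hf. apply lim_of_eps. intros e He. destruct (eps_of_lim f a Hf e He) as [M HM].
  exists M. intros t Ht. replace (f t + c - (a + c)) with (f t - a) by ring. auto.
Qed.

Lemma sin_minus_PI x : sin (x - PI) = - sin x.
Proof. rewrite sin_minus, cos_PI, sin_PI. ring. Qed.

Lemma sumN_ext N f g : (forall i, (i < N)%nat -> f i = g i) -> sumN N f = sumN N g.
Proof. induction N; simpl; intros H; auto. rewrite IHN, H; auto. Qed.

Lemma sumN_le N f g : (forall i, (i < N)%nat -> f i <= g i) -> sumN N f <= sumN N g.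
Proof. induction N; simpl; intros H; [lra|]. apply Rplus_le_compat; auto. Qed.

Lemma sumN_plus N f g : sumN N (fun i => f i + g i) = sumN N f + sumN N g.
Proof. induction N; simpl; [ring|]. rewrite IHN; ring. Qed.

Lemma sumN_const N c : sumN N (fun _ => c) = INR N * c.
Proof. induction N; simpl sumN; [simpl; ring|]. rewrite IHN, S_INR; ring. Qed.

Lemma sumN_scal N c f : sumN N (fun i => c * f i) = c * sumN N f.
Proof. induction N; simpl; [ring|]. rewrite IHN; ring. Qed.

Lemma sumN_opp N f : sumN N (fun i => - f i) = - sumN N f.
Proof. induction N; simpl; [ring|]. rewrite IHN; ring. Qed.

Lemma maxN_ge N f i : (i < N)%nat -> f i <= maxN N f.
Proof.
  induction N; intros Hi; [lia|].
  destruct N as [|N'].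
  - simpl. assert (i = 0)%nat by lia. subst; lra.
  - change (maxN (S (S N')) f) with (Rmax (maxN (S N') f) (f (S N'))).
    destruct (Nat.eq_dec i (S N')) as [->|Hne].
    + apply Rmax_r.
    + eapply Rle_trans; [apply IHN; lia| apply Rmax_l].
Qed.

Lemma is_derive_sumN N (f : nat -> R -> R) (df : nat -> R) t :
  (forall i, (i < N)%nat -> is_derive (f i) t (df i)) ->
  is_derive (fun x => sumN N (fun i => f i x)) t (sumN N df).
Proof.
  induction N; intros H; simpl.
  - apply (is_derive_const (K:=R_AbsRing) (V:=R_NormedModule) 0 t).
  - apply (is_derive_plus (fun x => sumN N (fun i => f i x)) (f N)).
    + apply IHN; intros; apply H; lia.
    + apply H; lia.
Qed.

Lemma cont_sumN N (f : nat -> R -> R) t :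
  (forall i, (i < N)%nat -> continuity_pt (f i) t) ->
  continuity_pt (fun x => sumN N (fun i => f i x)) t.
Proof.
  induction N; intros H; simpl.
  - apply continuity_pt_const. intros ? ?; auto.
  - apply (continuity_pt_plus (fun x => sumN N (fun i => f i x)) (f N)).
    + apply IHN; intros; apply H; lia.
    + apply H; lia.
Qed.

Lemma unif_exists (P : nat -> R -> Prop) n :
  (forall i B B', B <= B' -> P i B -> P i B') ->
  (forall i, (i < n)%nat -> exists B, P i B) -> exists B, forall i, (i < n)%nat -> P i B.
Proof.
  intros Hmon. induction n; intros H.
  - exists 0; intros; lia.
  - destruct IHn as [B1 HB1]; [intros; apply H; lia|].
    destruct (H n ltac:(lia)) as [B2 HB2].
    exists (Rmax B1 B2). intros i Hi. destruct (Nat.eq_dec i n) as [->|Hne].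
    + apply (Hmon n B2); [apply Rmax_r| auto].
    + apply (Hmon i B1); [apply Rmax_l| apply HB1; lia].
Qed.

Lemma Rabs_sumN N f : Rabs (sumN N f) <= sumN N (fun i => Rabs (f i)).
Proof. induction N; simpl; [rewrite Rabs_R0; lra|]. eapply Rle_trans; [apply Rabs_triang| lra]. Qed.

Lemma sumN_ge_term N f i : (i < N)%nat -> (forall j, (j < N)%nat -> 0 <= f j) -> f i <= sumN N f.
Proof.
  induction N; intros Hi Hf; [lia|]. simpl.
  destruct (Nat.eq_dec i N) as [->|Hne].
  - assert (0 <= sumN N f); [|lra].
    clear IHN Hi. assert (Hf' : forall j, (j < N)%nat -> 0 <= f j) by (intros; apply Hf; lia).
    clear Hf. induction N; simpl; [lra|]. pose proof (Hf' N ltac:(lia)).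
    assert (0 <= sumN N f) by (apply IHN; intros; apply Hf'; lia). lra.
  - pose proof (Hf N ltac:(lia)). assert (f i <= sumN N f) by (apply IHN; [lia| intros; apply Hf; lia]). lra.
Qed.

Lemma der_plus_const (f : R -> R) c x df : is_derive f x df -> is_derive (fun y => c + f y) x df.
Proof.
  intros H. apply is_derive_Reals in H. apply is_derive_Reals.
  replace df with (0 + df) by ring.
  apply (derivable_pt_lim_plus (fun _ => c) f); auto. apply derivable_pt_lim_const.
Qed.

Lemma der_scal_l (f : R -> R) c x df : is_derive f x df -> is_derive (fun y => c * f y) x (c * df).
Proof. intros H. apply is_derive_Reals in H. apply is_derive_Reals. apply (derivable_pt_lim_scal f); auto. Qed.

Section ODE.
Variables (N : nat) (omega : nat -> R) (kappa : R) (theta : nat -> R -> R) (mu : R).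
Local Notation Rt := (order_param N theta).
Local Notation W := (Omega_inf N omega).
Local Notation s := (sqrt (mu * (2 - mu))).
Hypothesis HN : (1 <= N)%nat.
Hypothesis Hder : forall i t, (i < N)%nat -> 0 <= t ->
  is_derive (theta i) t (omega i - kappa * Rt t * sin (theta i t)).
Hypothesis Hmu : 0 < mu.
Hypothesis Hmu1 : mu < 1.
Hypothesis HR0 : mu < Rt 0.
Hypothesis Hk : W < kappa * (Rt 0 - mu) * s.

Definition dth i t := omega i - kappa * Rt t * sin (theta i t).

Lemma INR_N_pos : 0 < INR N.
Proof. apply lt_0_INR; lia. Qed.

Lemma W_ge i : (i < N)%nat -> Rabs (omega i) <= W.
Proof. intros; unfold Omega_inf; apply (maxN_ge N (fun i => Rabs (omega i))); auto. Qed.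

Lemma W_pos : 0 <= W.
Proof. eapply Rle_trans; [apply Rabs_pos| apply (W_ge 0); lia]. Qed.

Lemma s_sq : s * s = mu * (2 - mu).
Proof. apply sqrt_sqrt; nra. Qed.

Lemma s_pos : 0 < s.
Proof. apply sqrt_lt_R0; nra. Qed.

Lemma s_lt1 : s < 1.
Proof. rewrite <- sqrt_1. apply sqrt_lt_1; nra. Qed.

Lemma kappa_pos : 0 < kappa.
Proof.
  pose proof W_pos; pose proof s_pos.
  assert (0 < kappa * ((Rt 0 - mu) * s)) by (rewrite <- Rmult_assoc; lra).
  assert (0 < (Rt 0 - mu) * s) by (apply Rmult_lt_0_compat; lra).
  destruct (Rle_dec kappa 0); [|lra].
  assert (kappa * ((Rt 0 - mu) * s) <= 0) by (apply Rmult_le_0_r; lra). lra.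
Qed.

Lemma Rt_bounds t : 0 <= Rt t <= 2.
Proof.
  pose proof INR_N_pos. unfold order_param.
  assert (H1 : 0 <= sumN N (fun j => 1 + cos (theta j t))).
  { assert (INR N * 0 <= sumN N (fun j => 1 + cos (theta j t))); [|lra].
    rewrite <- sumN_const.
    apply sumN_le; intros. pose proof (COS_bound (theta i t)); lra. }
  assert (H2 : sumN N (fun j => 1 + cos (theta j t)) <= INR N * 2).
  { rewrite <- sumN_const. apply sumN_le; intros. pose proof (COS_bound (theta i t)); lra. }
  split.
  - apply Rmult_le_pos; [apply Rlt_le, Rinv_0_lt_compat; lra| lra].
  - apply (Rmult_le_reg_l (INR N)); auto. rewrite <- Rmult_assoc, Rinv_r by lra. lra.
Qed.

Lemma th_der i t : (i < N)%nat -> 0 <= t -> is_derive (theta i) t (dth i t).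
Proof. intros; apply Hder; auto. Qed.

Lemma th_cont i t : (i < N)%nat -> 0 <= t -> continuity_pt (theta i) t.
Proof. intros; eapply deriv_cont, th_der; eauto. Qed.

Lemma cos_th_der i t : (i < N)%nat -> 0 <= t ->
  is_derive (fun x => cos (theta i x)) t (- sin (theta i t) * dth i t).
Proof.
  intros Hi Ht.
  replace (- sin (theta i t) * dth i t) with (dth i t * (- sin (theta i t))) by ring.
  apply (is_derive_comp cos (theta i)).
  - apply is_derive_Reals. apply derivable_pt_lim_cos.
  - apply th_der; auto.
Qed.

Lemma cos_th_cont i t : (i < N)%nat -> 0 <= t -> continuity_pt (fun x => cos (theta i x)) t.
Proof. intros; eapply deriv_cont, cos_th_der; eauto. Qed.

Lemma Rt_cont t : 0 <= t -> continuity_pt Rt t.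
Proof.
  intros Ht. unfold order_param.
  apply continuity_pt_mult.
  - apply continuity_pt_const; intros ? ?; auto.
  - apply (cont_sumN N (fun j x => 1 + cos (theta j x))). intros i Hi.
    apply continuity_pt_plus; [apply continuity_pt_const; intros ? ?; auto|].
    apply cos_th_cont; auto.
Qed.

Lemma push_pos i t m : (i < N)%nat -> W < kappa * Rt t * s ->
  -1 + mu <= m <= 1 - mu -> cos (theta i t) = m ->
  0 < - sin (theta i t) * dth i t.
Proof.
  intros Hi HW Hm Hc. unfold dth.
  set (x := sin (theta i t)).
  assert (Hx2 : s * s <= x * x).
  { rewrite s_sq. unfold x. pose proof (sin2_cos2 (theta i t)). unfold Rsqr in H.
    rewrite Hc in H. nra. }
  assert (Hax : s <= Rabs x).
  { rewrite <- (sqrt_Rsqr (Rabs x)) by apply Rabs_pos. rewrite <- Rsqr_abs.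
    rewrite <- (sqrt_Rsqr s) by (left; apply s_pos). apply sqrt_le_1_alt. unfold Rsqr; lra. }
  pose proof (W_ge i Hi). pose proof s_pos. pose proof kappa_pos.
  assert (HkR : 0 < kappa * Rt t).
  { destruct (Rle_dec (kappa * Rt t) 0); [|lra]. assert (kappa * Rt t * s <= 0) by (apply Rmult_le_0_r; lra). pose proof W_pos; lra. }
  replace (- x * (omega i - kappa * Rt t * x)) with (kappa * Rt t * (x * x) - omega i * x) by ring.
  assert (Hox : omega i * x <= W * Rabs x).
  { eapply Rle_trans; [apply Rle_abs|]. rewrite Rabs_mult. apply Rmult_le_compat_r; auto; apply Rabs_pos. }
  assert (Hxx : x * x = Rabs x * Rabs x) by (rewrite <- Rabs_mult; rewrite Rabs_right; [auto| nra]).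
  rewrite Hxx.
  assert (0 < Rabs x * (kappa * Rt t * Rabs x - W)).
  { apply Rmult_lt_0_compat; [lra|]. assert (kappa * Rt t * s <= kappa * Rt t * Rabs x) by (apply Rmult_le_compat_l; lra). lra. }
  nra.
Qed.

Lemma part_barrier T : 0 <= T -> (forall t, 0 <= t <= T -> W < kappa * Rt t * s) ->
  forall i t0 m, (i < N)%nat -> 0 <= t0 -> -1 + mu <= m <= 1 - mu -> m <= cos (theta i t0) ->
  forall t, t0 <= t <= T -> m <= cos (theta i t).
Proof.
  intros HT HW i t0 m Hi Ht0 Hm Hc0 t Ht.
  apply (barrier_strict (fun x => cos (theta i x)) t0 T m); auto; try lra.
  - intros x Hx; apply cos_th_cont; auto; lra.
  - intros x Hx Heq. exists (- sin (theta i x) * dth i x). split.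
    + apply cos_th_der; auto; lra.
    + apply (push_pos i x m); auto. apply HW; lra.
Qed.

Definition delta := (kappa * (Rt 0 - mu) * s - W) / (2 * kappa * s).

Lemma delta_prop : 0 < delta /\ W < kappa * (Rt 0 - mu - delta) * s.
Proof.
  pose proof kappa_pos; pose proof s_pos. unfold delta. split.
  - apply Rdiv_lt_0_compat; [lra| nra].
  - replace (kappa * (Rt 0 - mu - (kappa * (Rt 0 - mu) * s - W) / (2 * kappa * s)) * s)
      with (kappa * (Rt 0 - mu) * s - (kappa * (Rt 0 - mu) * s - W) / 2) by (field; lra). lra.
Qed.

Theorem part_a : forall t, 0 <= t -> Rt 0 - mu <= Rt t.
Proof.
  intros t1 Ht1. destruct (Rle_dec (Rt 0 - mu) (Rt t1)) as [|Hn]; auto. exfalso.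
  destruct delta_prop as [Hd1 Hd2].
  set (L := Rmax (Rt t1) (Rt 0 - mu - delta)).
  assert (HL : L < Rt 0 - mu) by (unfold L; apply Rmax_case_strong; intros; lra).
  destruct (first_time (fun x => - Rt x) 0 t1 (- L)) as [c [Hc1 [Hc2 Hc3]]]; auto.
  - intros x Hx; apply continuity_pt_opp, Rt_cont; lra.
  - simpl; lra.
  - unfold L; simpl. assert (Rt t1 <= L) by apply Rmax_l. unfold L in H; lra.
  - assert (Hge : forall x, 0 <= x <= c -> Rt 0 - mu - delta <= Rt x).
    { intros x Hx. destruct (Rle_lt_or_eq_dec _ _ (proj2 Hx)).
      - assert (- Rt x < - L) by (apply Hc3; lra). assert (Rt 0 - mu - delta <= L) by apply Rmax_r. lra.
      - subst. assert (Rt 0 - mu - delta <= L) by apply Rmax_r. lra. }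
    assert (HW : forall x, 0 <= x <= c -> W < kappa * Rt x * s).
    { intros x Hx. pose proof (Hge x Hx). pose proof kappa_pos; pose proof s_pos.
      assert (kappa * (Rt 0 - mu - delta) * s <= kappa * Rt x * s).
      { apply Rmult_le_compat_r; [lra|]. apply Rmult_le_compat_l; lra. }
      lra. }
    assert (Hpart : forall i, (i < N)%nat -> 1 + cos (theta i 0) - mu <= 1 + cos (theta i c)).
    { intros i Hi. destruct (Rle_dec (-1 + mu) (cos (theta i 0))) as [Hg|Hb].
      - assert (Rmin (cos (theta i 0)) (1 - mu) <= cos (theta i c)).
        { apply (part_barrier c) with (t0 := 0); auto; try lra.
          - split; [apply Rmin_case_strong; intros; lra| apply Rmin_r].
          - apply Rmin_l. }
        revert H. apply Rmin_case_strong; intros; pose proof (COS_bound (theta i 0)); lra.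
      - pose proof (COS_bound (theta i c)); lra. }
    assert (Rt 0 - mu <= Rt c).
    { unfold order_param. pose proof INR_N_pos.
      assert (sumN N (fun j => 1 + cos (theta j 0)) - INR N * mu <= sumN N (fun j => 1 + cos (theta j c))).
      { rewrite <- sumN_const. unfold Rminus. rewrite <- sumN_opp, <- sumN_plus.
        apply sumN_le; intros; specialize (Hpart i H0); lra. }
      apply (Rmult_le_compat_l (/ INR N)) in H0; [|apply Rlt_le, Rinv_0_lt_compat; lra].
      rewrite Rmult_minus_distr_l, <- Rmult_assoc, Rinv_l, Rmult_1_l in H0 by lra. lra. }
    simpl in Hc2. lra.
Qed.


Lemma kRs t : 0 <= t -> W < kappa * Rt t * s.
Proof.
  intros Ht. pose proof (part_a t Ht). pose proof kappa_pos; pose proof s_pos.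
  assert (kappa * (Rt 0 - mu) * s <= kappa * Rt t * s).
  { apply Rmult_le_compat_r; [lra|]. apply Rmult_le_compat_l; lra. }
  lra.
Qed.

Lemma persist i t0 m : (i < N)%nat -> 0 <= t0 -> -1 + mu <= m <= 1 - mu ->
  m <= cos (theta i t0) -> forall t, t0 <= t -> m <= cos (theta i t).
Proof.
  intros Hi Ht0 Hm Hc t Ht.
  apply (part_barrier t) with (t0 := t0); auto; try lra.
  intros x Hx; apply kRs; lra.
Qed.

Lemma abs_sin_ge x : -1 + mu <= cos x <= 1 - mu -> s <= Rabs (sin x).
Proof.
  intros Hc.
  assert (Hx2 : s * s <= sin x * sin x).
  { rewrite s_sq. pose proof (sin2_cos2 x). unfold Rsqr in H. nra. }
  rewrite <- (sqrt_Rsqr (Rabs (sin x))) by apply Rabs_pos. rewrite <- Rsqr_abs.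
  rewrite <- (sqrt_Rsqr s) by (left; apply s_pos). apply sqrt_le_1_alt. unfold Rsqr; lra.
Qed.

Definition vel := kappa * (Rt 0 - mu) * s - W.
Definition tau := PI / vel.

Lemma vel_pos : 0 < vel.
Proof. unfold vel; lra. Qed.

Lemma tau_pos : 0 < tau.
Proof. unfold tau; apply Rdiv_lt_0_compat; [apply PI_RGT_0| apply vel_pos]. Qed.

Lemma reach i t0 : (i < N)%nat -> 0 <= t0 -> -1 + mu <= cos (theta i t0) ->
  exists u, t0 <= u <= t0 + tau /\ 1 - mu <= cos (theta i u).
Proof.
  intros Hi Ht0 Hc0. apply NNPP; intro Hno.
  assert (Hlt : forall u, t0 <= u <= t0 + tau -> cos (theta i u) < 1 - mu).
  { intros u Hu. destruct (Rlt_dec (cos (theta i u)) (1 - mu)); auto.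
    exfalso; apply Hno; exists u; split; auto; lra. }
  pose proof tau_pos. pose proof vel_pos. pose proof s_pos. pose proof kappa_pos.
  assert (Hsin : forall u, t0 <= u <= t0 + tau -> s <= Rabs (sin (theta i u))).
  { intros u Hu. apply abs_sin_ge. split; [apply (persist i t0); auto; lra| pose proof (Hlt u Hu); lra]. }
  assert (HR : forall u, t0 <= u -> Rt 0 - mu <= Rt u) by (intros; apply part_a; lra).
  assert (Hcont : forall u, t0 <= u <= t0 + tau -> continuity_pt (theta i) u) by (intros; apply th_cont; auto; lra).
  assert (Hvtau : vel * tau = PI) by (unfold tau; field; lra).
  assert (HMVT : exists xi, theta i (t0 + tau) - theta i t0 = dth i xi * (t0 + tau - t0) /\ t0 < xi < t0 + tau).
  { apply MVT_cor2; [lra|]. intros c Hc. apply is_derive_Reals, th_der; auto; lra. }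
  destruct HMVT as [xi [Hxi1 Hxi2]].
  replace (t0 + tau - t0) with tau in Hxi1 by ring.
  pose proof (Hsin t0 ltac:(lra)) as Hs0.
  destruct (Rlt_dec 0 (sin (theta i t0))) as [Hp|Hnp].
  - destruct (sin_pos_arc _ Hp) as [k Hkk].
    assert (Hin : forall u, t0 <= u <= t0 + tau -> 2 * IZR k * PI < theta i u < 2 * IZR k * PI + PI).
    { apply stay; auto; try lra. intros u Hu. pose proof (Hsin u Hu). split; intros He.
      - rewrite He in H3. replace (2 * IZR k * PI) with (0 + 2 * IZR k * PI) in H3 by ring.
        rewrite sinZ, sin_0, Rabs_R0 in H3. lra.
      - rewrite He in H3. replace (2 * IZR k * PI + PI) with (PI + 2 * IZR k * PI) in H3 by ring.
        rewrite sinZ, sin_PI, Rabs_R0 in H3. lra. }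
    assert (Hsx : s <= sin (theta i xi)).
    { pose proof (Hsin xi ltac:(lra)). pose proof (Hin xi ltac:(lra)).
      assert (0 < sin (theta i xi)).
      { rewrite <- (sinZ _ (- k)). rewrite opp_IZR. apply sin_gt_0; lra. }
      rewrite Rabs_right in H3; lra. }
    assert (dth i xi <= - vel).
    { unfold dth, vel. pose proof (W_ge i Hi). pose proof (Rle_abs (omega i)).
      pose proof (HR xi ltac:(lra)).
      assert (kappa * (Rt 0 - mu) * s <= kappa * Rt xi * sin (theta i xi)).
      { apply Rmult_le_compat; try lra. apply Rmult_le_pos; lra. apply Rmult_le_compat_l; lra. }
      lra. }
    pose proof (Hin (t0 + tau) ltac:(lra)). pose proof (Hin t0 ltac:(lra)).
    assert (dth i xi * tau <= - vel * tau) by (apply Rmult_le_compat_r; lra).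
    lra.
  - assert (Hn : sin (theta i t0) < 0).
    { destruct (Req_dec (sin (theta i t0)) 0) as [He|]; [rewrite He, Rabs_R0 in Hs0; lra| lra]. }
    destruct (sin_neg_arc _ Hn) as [k Hkk].
    assert (Hin : forall u, t0 <= u <= t0 + tau -> 2 * IZR k * PI - PI < theta i u < 2 * IZR k * PI).
    { apply stay; auto; try lra. intros u Hu. pose proof (Hsin u Hu). split; intros He.
      - rewrite He in H3. replace (2 * IZR k * PI - PI) with (- PI + 2 * IZR k * PI) in H3 by ring.
        rewrite sinZ, sin_neg, sin_PI, Ropp_0, Rabs_R0 in H3. lra.
      - rewrite He in H3. replace (2 * IZR k * PI) with (0 + 2 * IZR k * PI) in H3 by ring.
        rewrite sinZ, sin_0, Rabs_R0 in H3. lra. }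
    assert (Hsx : sin (theta i xi) <= - s).
    { pose proof (Hsin xi ltac:(lra)). pose proof (Hin xi ltac:(lra)).
      assert (sin (theta i xi) < 0).
      { rewrite <- (sinZ _ (- k)). rewrite opp_IZR. apply sin_lt_0_var; lra. }
      rewrite Rabs_left in H3; lra. }
    assert (vel <= dth i xi).
    { unfold dth, vel. pose proof (W_ge i Hi). pose proof (Rle_abs (- omega i)). rewrite Rabs_Ropp in H4.
      pose proof (HR xi ltac:(lra)).
      assert (kappa * (Rt 0 - mu) * s <= kappa * Rt xi * (- sin (theta i xi))).
      { apply Rmult_le_compat; try lra. apply Rmult_le_pos; lra. apply Rmult_le_compat_l; lra. }
      lra. }
    pose proof (Hin (t0 + tau) ltac:(lra)). pose proof (Hin t0 ltac:(lra)).
    assert (vel * tau <= dth i xi * tau) by (apply Rmult_le_compat_r; lra).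
    lra.
Qed.

Theorem part_c i t0 : (i < N)%nat -> 0 <= t0 -> cos (theta i t0) >= -1 + mu ->
  (forall t, t >= t0 -> cos (theta i t) >= -1 + mu) /\
  (forall t, t >= t0 + tau -> cos (theta i t) >= 1 - mu).
Proof.
  intros Hi Ht0 Hc. split.
  - intros t Ht. apply Rle_ge, (persist i t0); auto; lra.
  - intros t Ht. destruct (reach i t0 Hi Ht0 ltac:(lra)) as [u [Hu Hcu]].
    apply Rle_ge, (persist i u); auto; lra.
Qed.


Lemma arc_fix i t0 : (i < N)%nat -> 0 <= t0 -> -1 + mu <= cos (theta i t0) ->
  exists k : Z, forall t, t0 + tau <= t ->
    -(PI/2) < theta i t - 2 * IZR k * PI < PI/2 /\ 1 - mu <= cos (theta i t - 2 * IZR k * PI).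
Proof.
  intros Hi Ht0 Hc. pose proof tau_pos.
  destruct (part_c i t0 Hi Ht0 ltac:(lra)) as [_ Hc2].
  assert (Hp : 0 < cos (theta i (t0 + tau))) by (pose proof (Hc2 (t0 + tau) ltac:(lra)); lra).
  destruct (cos_pos_arc _ Hp) as [k Hkk]. exists k. intros t Ht.
  assert (Hcos : forall x, cos (x - 2 * IZR k * PI) = cos x).
  { intros x. rewrite <- (cosZ _ k). f_equal; ring. }
  rewrite Hcos. split; [| pose proof (Hc2 t ltac:(lra)); lra].
  assert (2 * IZR k * PI - PI/2 < theta i t < 2 * IZR k * PI + PI/2); [|lra].
  apply (stay (theta i) (t0 + tau) t); auto; try lra.
  - intros x Hx; apply th_cont; auto; lra.
  - intros x Hx. pose proof (Hc2 x ltac:(lra)). split; intros He; rewrite He in H0.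
    + replace (2 * IZR k * PI - PI / 2) with (IZR (2 * k - 1) * PI + PI/2) in H0
        by (rewrite minus_IZR, mult_IZR; simpl; field).
      rewrite cos_oddPI2 in H0. lra.
    + replace (2 * IZR k * PI + PI / 2) with (IZR (2 * k) * PI + PI/2) in H0
        by (rewrite mult_IZR; simpl; field).
      rewrite cos_oddPI2 in H0. lra.
Qed.

Theorem part_e i j t0 : (i < N)%nat -> (j < N)%nat -> 0 <= t0 ->
  cos (theta i t0) >= -1 + mu -> cos (theta j t0) >= -1 + mu ->
  let lam := kappa * (Rt 0 - mu) * (1 - mu) in
  (omega i > omega j ->
    exists k : Z,
      (forall t, t >= t0 + tau ->
         theta i t - theta j t + 2 * IZR k * PI
           <= (omega i - omega j) / lam + PI * exp (- lam * (t - t0 - tau))) /\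
      (forall t, t >= t0 + tau + PI / (omega i - omega j) ->
         theta i t - theta j t + 2 * IZR k * PI
           >= (omega i - omega j) / (2 * kappa)
              - (omega i - omega j) / (2 * kappa)
                * exp (- 2 * kappa * (t - t0 - tau - PI / (omega i - omega j))))) /\
  (omega i = omega j ->
    exists k : Z, forall t, t >= t0 + tau ->
      Rabs (theta i t - theta j t + 2 * IZR k * PI)
        <= PI * exp (- lam * (t - t0 - tau))).
Proof.
  intros Hi Hj Ht0 Hci Hcj lam.
  destruct (arc_fix i t0 Hi Ht0 ltac:(lra)) as [ki Hki].
  destruct (arc_fix j t0 Hj Ht0 ltac:(lra)) as [kj Hkj].
  pose proof tau_pos as Htau. pose proof kappa_pos as Hkap. pose proof PI_RGT_0 as HPI.
  set (t1 := t0 + tau).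
  assert (Hlam : 0 < lam) by (unfold lam; apply Rmult_lt_0_compat; [apply Rmult_lt_0_compat|]; lra).
  set (a := fun t => theta i t - 2 * IZR ki * PI).
  set (b := fun t => theta j t - 2 * IZR kj * PI).
  set (D := fun t => a t - b t).
  assert (HD : forall t, D t = theta i t - theta j t + 2 * IZR (kj - ki) * PI).
  { intros t; unfold D, a, b; rewrite minus_IZR; ring. }
  set (dD := fun t => (omega i - omega j) - kappa * Rt t * (sin (a t) - sin (b t))).
  assert (Hsa : forall t, sin (a t) = sin (theta i t)).
  { intros t; unfold a. rewrite <- (sinZ _ ki). f_equal; ring. }
  assert (Hsb : forall t, sin (b t) = sin (theta j t)).
  { intros t; unfold b. rewrite <- (sinZ _ kj). f_equal; ring. }
  assert (HdD : forall t, t1 <= t -> is_derive D t (dD t)).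
  { intros t Ht. unfold D, dD. rewrite Hsa, Hsb.
    replace (omega i - omega j - kappa * Rt t * (sin (theta i t) - sin (theta j t)))
      with (dth i t - dth j t) by (unfold dth; ring).
    apply is_derive_Reals. unfold a, b.
    apply (derivable_pt_lim_minus (fun x => theta i x - 2 * IZR ki * PI) (fun x => theta j x - 2 * IZR kj * PI)).
    - apply is_derive_Reals. apply der_minc, th_der; auto; unfold t1 in Ht; lra.
    - apply is_derive_Reals. apply der_minc, th_der; auto; unfold t1 in Ht; lra. }
  assert (Hab : forall t, t1 <= t -> -(PI/2) < a t < PI/2 /\ 1 - mu <= cos (a t) /\
                                      -(PI/2) < b t < PI/2 /\ 1 - mu <= cos (b t)).
  { intros t Ht. destruct (Hki t Ht), (Hkj t Ht). unfold a, b. repeat split; lra. }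
  assert (HR : forall t, t1 <= t -> Rt 0 - mu <= Rt t <= 2).
  { intros t Ht. split; [apply part_a; unfold t1 in Ht; lra| apply Rt_bounds]. }
  assert (HDpos : forall t, t1 <= t -> 0 <= D t -> lam * D t <= kappa * Rt t * (sin (a t) - sin (b t)) <= 2 * kappa * D t).
  { intros t Ht HD0. destruct (Hab t Ht) as [Ha [Hca [Hb Hcb]]].
    destruct (sin_diff_bounds (a t) (b t) (1 - mu) Ha Hb Hca Hcb) as [L U]; [unfold D in HD0; lra|].
    destruct (HR t Ht). unfold lam, D in *. split.
    - replace (kappa * (Rt 0 - mu) * (1 - mu) * (a t - b t)) with (kappa * (Rt 0 - mu) * ((1 - mu) * (a t - b t))) by ring.
      apply Rmult_le_compat; try nra.
    - replace (2 * kappa * (a t - b t)) with (kappa * 2 * (a t - b t)) by ring.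
      apply Rmult_le_compat; try nra. }
  assert (HDneg : forall t, t1 <= t -> D t <= 0 -> kappa * Rt t * (sin (a t) - sin (b t)) <= lam * D t).
  { intros t Ht HD0. destruct (Hab t Ht) as [Ha [Hca [Hb Hcb]]].
    destruct (sin_diff_bounds (b t) (a t) (1 - mu) Hb Ha Hcb Hca) as [L U]; [unfold D in HD0; lra|].
    destruct (HR t Ht). unfold lam, D in *.
    assert (kappa * (Rt 0 - mu) * ((1 - mu) * (b t - a t)) <= kappa * Rt t * (sin (b t) - sin (a t)))
      by (apply Rmult_le_compat; try nra).
    nra. }
  assert (HDlt : forall t, t1 <= t -> D t < 0 -> omega i - omega j < dD t).
  { intros t Ht HD0. destruct (Hab t Ht) as [Ha [Hca [Hb Hcb]]].
    assert (sin (a t) < sin (b t)) by (apply sin_increasing_1; unfold D in HD0; lra).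
    destruct (HR t Ht). unfold dD.
    assert (0 < kappa * Rt t) by (apply Rmult_lt_0_compat; lra).
    assert (0 < kappa * Rt t * (sin (b t) - sin (a t))) by (apply Rmult_lt_0_compat; lra).
    lra. }
  assert (HDbound : forall t, t1 <= t -> -PI < D t < PI).
  { intros t Ht. destruct (Hab t Ht) as [Ha [_ [Hb _]]]. unfold D. lra. }
  split.
  - intros Hgt. exists (kj - ki)%Z. set (dw := omega i - omega j).
    assert (Hdw : 0 < dw) by (unfold dw; lra).
    split.
    + intros t Ht. rewrite <- HD.
      replace (t - t0 - tau) with (t - t1) by (unfold t1; ring).
      apply (exp_bound D dD t1 lam (dw / lam) PI); auto; try lra.
      * pose proof (HDbound t1 ltac:(lra)). assert (0 < dw / lam) by (apply Rdiv_lt_0_compat; lra). lra.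
      * intros x Hx Hc. assert (0 < dw / lam) by (apply Rdiv_lt_0_compat; lra).
        destruct (HDpos x Hx ltac:(lra)) as [L _]. unfold dD.
        replace (- lam * (D x - dw / lam)) with (dw - lam * D x) by (field; lra). unfold dw in *. lra.
    + set (t2 := t1 + PI / dw).
      assert (Hpd : 0 < PI / dw) by (apply Rdiv_lt_0_compat; lra).
      assert (HDt2 : 0 <= D t2).
      { destruct (Rle_dec 0 (D t2)) as [|Hn]; auto. exfalso.
        destruct (classic (exists u, t1 <= u <= t2 /\ 0 <= D u)) as [[u [Hu HDu]]|Hno].
        - destruct (last_time (fun x => - D x) u t2 0) as [c [Hc1 [Hc2 Hc3]]]; try lra.
          + intros x Hx. apply continuity_pt_opp. eapply deriv_cont, HdD; lra.
          + destruct (MVT_cor2 D dD c t2) as [xi [Hxi1 Hxi2]]; [lra| intros x Hx; apply is_derive_Reals, HdD; lra|].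
            assert (0 < dD xi).
            { pose proof (Hc3 xi ltac:(lra)). pose proof (HDlt xi ltac:(lra) ltac:(lra)). unfold dw in *; lra. }
            assert (0 < dD xi * (t2 - c)) by (apply Rmult_lt_0_compat; lra). lra.
        - destruct (MVT_cor2 D dD t1 t2) as [xi [Hxi1 Hxi2]]; [unfold t2; lra| intros x Hx; apply is_derive_Reals, HdD; lra|].
          assert (D xi < 0).
          { destruct (Rlt_dec (D xi) 0); auto. exfalso; apply Hno; exists xi; split; [lra|lra]. }
          pose proof (HDlt xi ltac:(lra) H).
          replace (t2 - t1) with (PI / dw) in Hxi1 by (unfold t2; ring).
          assert (dw * (PI / dw) <= dD xi * (PI / dw)) by (apply Rmult_le_compat_r; unfold dw in *; lra).
          replace (dw * (PI / dw)) with PI in H1 by (field; lra).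
          pose proof (HDbound t1 ltac:(lra)). lra. }
      assert (HDge : forall t, t2 <= t -> 0 <= D t).
      { intros t Ht. apply (barrier_strict D t2 t 0); auto; try lra.
        - intros x Hx. eapply deriv_cont, HdD. unfold t2 in Hx; lra.
        - intros x Hx Hx0. exists (dD x). split; [apply HdD; unfold t2 in Hx; lra|].
          unfold dD. unfold D in Hx0. replace (b x) with (a x) by lra. unfold dw in Hdw. lra. }
      intros t Ht. rewrite <- HD.
      assert (Hk2 : 0 < 2 * kappa) by lra.
      pose proof (exp_bound (fun x => - D x) (fun x => - dD x) t2 (2 * kappa) (- (dw / (2 * kappa))) (dw / (2 * kappa))) as EB.
      assert (- D t <= - (dw / (2 * kappa)) + dw / (2 * kappa) * exp (- (2 * kappa) * (t - t2))).
      { apply EB.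
        - intros x Hx. apply is_derive_Reals, derivable_pt_lim_opp, is_derive_Reals, HdD. unfold t2 in Hx; lra.
        - lra.
        - apply Rlt_le, Rdiv_lt_0_compat; lra.
        - intros x Hx _. pose proof (HDge x Hx). destruct (HDpos x ltac:(unfold t2 in Hx; lra) H) as [_ U].
          unfold dD. replace (- (2 * kappa) * (- D x - - (dw / (2 * kappa)))) with (2 * kappa * D x - dw) by (field; lra).
          unfold dw in *. lra.
        - unfold t2, t1, dw in *; lra. }
      assert (Hex : exp (- 2 * kappa * (t - t0 - tau - PI / (omega i - omega j))) = exp (- (2 * kappa) * (t - t2)))
        by (unfold t2, t1, dw; f_equal; ring).
      unfold dw in *. rewrite Hex. lra.
  - intros Heq. exists (kj - ki)%Z. intros t Ht. rewrite <- HD.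
    replace (t - t0 - tau) with (t - t1) by (unfold t1; ring).
    assert (Hdd : forall x, dD x = - (kappa * Rt x * (sin (a x) - sin (b x)))) by (intros; unfold dD; rewrite Heq; ring).
    pose proof (HDbound t1 ltac:(lra)) as Hb1.
    assert (Htt : t1 <= t) by (unfold t1 in *; lra).
    apply Rabs_le. split.
    + assert (- D t <= 0 + PI * exp (- lam * (t - t1))); [|lra].
      apply (exp_bound (fun x => - D x) (fun x => - dD x) t1 lam 0 PI);
        [ intros x Hx; apply is_derive_Reals, derivable_pt_lim_opp, is_derive_Reals, HdD; lra
        | lra | lra
        | intros x Hx Hc; rewrite Hdd; pose proof (HDneg x Hx ltac:(lra)); lra
        | lra ].
    + assert (D t <= 0 + PI * exp (- lam * (t - t1))); [|lra].
      apply (exp_bound D dD t1 lam 0 PI);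
        [ apply HdD | lra | lra
        | intros x Hx Hc; rewrite Hdd; pose proof (HDpos x Hx ltac:(lra)); lra
        | lra ].
Qed.


Lemma classify i : (exists t0, 0 <= t0 /\ -1 + mu <= cos (theta i t0)) \/
                   (forall t, 0 <= t -> cos (theta i t) < -1 + mu).
Proof.
  destruct (classic (exists t0, 0 <= t0 /\ -1 + mu <= cos (theta i t0))) as [|Hn]; [left; auto| right].
  intros t Ht. destruct (Rlt_dec (cos (theta i t)) (-1 + mu)); auto.
  exfalso; apply Hn; exists t; split; auto; lra.
Qed.

Lemma range_b i : (i < N)%nat -> exists a b, b - a < 2 * PI /\ forall t, 0 <= t -> a <= theta i t <= b.
Proof.
  intros Hi. pose proof PI_RGT_0. pose proof tau_pos.
  assert (Hcont : forall t, 0 <= t -> continuity_pt (theta i) t) by (intros; apply th_cont; auto).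
  assert (Hcos0 : forall k, cos (2 * IZR k * PI + PI/2) = 0).
  { intros k. replace (2 * IZR k * PI + PI/2) with (IZR (2 * k) * PI + PI/2) by (rewrite mult_IZR; simpl; ring).
    apply cos_oddPI2. }
  assert (Hcos1 : forall k, cos (2 * IZR k * PI + 3 * (PI/2)) = 0).
  { intros k. replace (2 * IZR k * PI + 3 * (PI/2)) with (IZR (2 * k + 1) * PI + PI/2)
      by (rewrite plus_IZR, mult_IZR; simpl; field). apply cos_oddPI2. }
  assert (Hcos2 : forall k, cos (2 * IZR k * PI - PI) = -1).
  { intros k. replace (2 * IZR k * PI - PI) with (2 * IZR (k - 1) * PI + PI) by (rewrite minus_IZR; simpl; ring).
    apply cos_oddPI. }
  destruct (classify i) as [[t0 [Ht0 Hc0]] | HB].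
  - destruct (Rle_dec (-1 + mu) (cos (theta i 0))) as [HG|HnG].
    +
      assert (Hg : forall t, 0 <= t -> -1 + mu <= cos (theta i t)) by (intros; apply (persist i 0); auto; lra).
      destruct (cos_gtm1_arc (theta i 0)) as [k Hk0]; [lra|].
      set (K := 2 * IZR k * PI) in *.
      assert (Hin : forall t, 0 <= t -> K - PI < theta i t < K + PI).
      { intros t Ht. apply (stay (theta i) 0 t); auto; try lra.
        - intros x Hx; apply Hcont; lra.
        - intros x Hx. pose proof (Hg x ltac:(lra)). split; intros He; rewrite He in H1.
          + unfold K in H1; rewrite Hcos2 in H1; lra.
          + unfold K in H1; rewrite cos_oddPI in H1; lra. }
      destruct (part_c i 0 Hi ltac:(lra) ltac:(lra)) as [_ Htl].
      destruct (continuity_ab_maj (theta i) 0 tau ltac:(lra)) as [tm [Htm2 Htm1]]; [intros; apply Hcont; lra|].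
      destruct (continuity_ab_min (theta i) 0 tau ltac:(lra)) as [tn [Htn2 Htn1]]; [intros; apply Hcont; lra|].
      exists (Rmin (theta i tn) (K - PI/2)), (Rmax (theta i tm) (K + PI/2)). split.
      * pose proof (Hin tn ltac:(lra)). pose proof (Hin tm ltac:(lra)).
        apply Rmin_case_strong; apply Rmax_case_strong; intros; lra.
      * intros t Ht. destruct (Rle_dec t tau).
        -- pose proof (Htm2 t ltac:(lra)). pose proof (Htn2 t ltac:(lra)).
           split; [eapply Rle_trans; [apply Rmin_l| lra] | eapply Rle_trans; [|apply Rmax_l]; lra].
        -- assert (K - PI/2 < theta i t < K + PI/2).
           { apply cos_pos_in; [apply Hin; lra|]. pose proof (Htl t ltac:(lra)). lra. }
           split; [eapply Rle_trans; [apply Rmin_r| lra] | eapply Rle_trans; [|apply Rmax_r]; lra].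
    +
      destruct (first_time (fun x => cos (theta i x)) 0 t0 (-1 + mu)) as [tst [Hts1 [Hts2 Hts3]]]; auto; try lra.
      { intros x Hx; apply cos_th_cont; auto; lra. }
      simpl in Hts2, Hts3.
      assert (Haft : forall t, tst <= t -> -1 + mu <= cos (theta i t)) by (intros; apply (persist i tst); auto; lra).
      assert (Hbef : forall t, 0 <= t <= tst -> cos (theta i t) < 0).
      { intros t Ht. destruct (Rle_lt_or_eq_dec _ _ (proj2 Ht)) as [Hl | Heq]; [pose proof (Hts3 t ltac:(lra)); lra| subst; lra]. }
      destruct (part_c i tst Hi ltac:(lra) ltac:(lra)) as [_ Htl].
      destruct (cos_gtm1_arc (theta i tst)) as [k Hk0]; [lra|].
      assert (Hin : forall t, tst <= t -> 2 * IZR k * PI - PI < theta i t < 2 * IZR k * PI + PI).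
      { intros t Ht. apply (stay (theta i) tst t); auto; try lra.
        - intros x Hx; apply Hcont; lra.
        - intros x Hx. pose proof (Haft x ltac:(lra)). split; intros He; rewrite He in H1.
          + rewrite Hcos2 in H1; lra.
          + rewrite cos_oddPI in H1; lra. }
      assert (Hneg : cos (theta i tst) < 0) by lra.
      destruct (Rle_dec (2 * IZR k * PI) (theta i tst)) as [Hup|Hlo].
      * assert (Hup2 : 2 * IZR k * PI + PI/2 < theta i tst).
        { destruct (Rlt_dec (2 * IZR k * PI + PI/2) (theta i tst)); auto.
          rewrite <- (cos_shift_k _ k) in Hneg. assert (0 <= cos (theta i tst - 2 * IZR k * PI)) by (apply cos_ge_0; lra). lra. }
        apply (range_core (theta i) (-1 + mu) tst (tst + tau) k); [lra | split; lra | exact Hcont | | exact Haft | | exact Hin | ].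
        -- intros t Ht. apply Hts3; lra.
        -- intros t Ht. pose proof (Htl t ltac:(lra)). lra.
        -- intros t Ht. apply (stay_back (theta i) 0 tst); auto; try lra.
           ++ intros x Hx; apply Hcont; lra.
           ++ intros x Hx. pose proof (Hbef x Hx). split; intros He; rewrite He in H1.
              ** rewrite Hcos0 in H1; lra.
              ** rewrite Hcos1 in H1; lra.
      * assert (Hlo2 : theta i tst < 2 * IZR k * PI - PI/2).
        { destruct (Rlt_dec (theta i tst) (2 * IZR k * PI - PI/2)); auto.
          rewrite <- (cos_shift_k _ k) in Hneg. assert (0 <= cos (theta i tst - 2 * IZR k * PI)) by (apply cos_ge_0; lra). lra. }
        destruct (range_core (fun x => - theta i x) (-1 + mu) tst (tst + tau) (- k)) as [a [b [Hab Hall]]]; [lra | split; lra | | | | | | | ].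
        -- intros t Ht. apply continuity_pt_opp, Hcont; auto.
        -- intros t Ht. rewrite cos_neg. apply Hts3; lra.
        -- intros t Ht. rewrite cos_neg. apply Haft; lra.
        -- intros t Ht. rewrite cos_neg. pose proof (Htl t ltac:(lra)). lra.
        -- intros t Ht. pose proof (Hin t Ht). rewrite opp_IZR. lra.
        -- intros t Ht. rewrite opp_IZR.
           assert (2 * IZR k * PI - 3 * (PI/2) < theta i t < 2 * IZR k * PI - PI/2); [|lra].
           apply (stay_back (theta i) 0 tst); auto; try lra.
           ++ intros x Hx; apply Hcont; lra.
           ++ intros x Hx. pose proof (Hbef x Hx). split; intros He; rewrite He in H1.
              ** replace (2 * IZR k * PI - 3 * (PI / 2)) with (2 * IZR (k - 1) * PI + PI/2) in H1
                   by (rewrite minus_IZR; simpl; field). rewrite Hcos0 in H1; lra.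
              ** replace (2 * IZR k * PI - PI / 2) with (2 * IZR (k - 1) * PI + 3 * (PI/2)) in H1
                   by (rewrite minus_IZR; simpl; field). rewrite Hcos1 in H1; lra.
        -- exists (- b), (- a). split; [lra|]. intros t Ht. pose proof (Hall t Ht). lra.
  - destruct (cos_neg_arc (theta i 0)) as [k Hk0]; [pose proof (HB 0 ltac:(lra)); lra|].
    exists (2 * IZR k * PI + PI/2), (2 * IZR k * PI + 3 * (PI/2)). split; [lra|].
    intros t Ht.
    assert (2 * IZR k * PI + PI/2 < theta i t < 2 * IZR k * PI + 3 * (PI/2)); [|lra].
    apply (stay (theta i) 0 t); auto; try lra.
    + intros x Hx; apply Hcont; lra.
    + intros x Hx. pose proof (HB x ltac:(lra)). split; intros He; rewrite He in H1.
      * rewrite Hcos0 in H1; lra.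
      * rewrite Hcos1 in H1; lra.
Qed.


Definition Dm := W + 2 * kappa.

Lemma dth_bound i t : (i < N)%nat -> Rabs (dth i t) <= Dm.
Proof.
  intros Hi. unfold dth, Dm. pose proof (W_ge i Hi). pose proof (Rt_bounds t). pose proof kappa_pos.
  eapply Rle_trans; [apply Rabs_triang|]. rewrite Rabs_Ropp, !Rabs_mult.
  rewrite (Rabs_right kappa), (Rabs_right (Rt t)) by lra.
  assert (Rabs (sin (theta i t)) <= 1) by (apply Rabs_le; apply SIN_bound).
  assert (kappa * Rt t * Rabs (sin (theta i t)) <= kappa * 2 * 1).
  { apply Rmult_le_compat; try apply Rabs_pos; try lra. apply Rmult_le_pos; lra. apply Rmult_le_compat_l; lra. }
  lra.
Qed.

Lemma th_lip i t t' : (i < N)%nat -> 0 <= t <= t' -> Rabs (theta i t' - theta i t) <= Dm * (t' - t).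
Proof.
  intros Hi Ht. apply (lip_deriv (theta i) (dth i)); try lra.
  - intros; apply th_der; auto; lra.
  - intros; apply dth_bound; auto.
Qed.

Lemma Rt_lip t t' : 0 <= t <= t' -> Rabs (Rt t' - Rt t) <= Dm * (t' - t).
Proof.
  intros Ht. pose proof INR_N_pos. unfold order_param.
  rewrite <- Rmult_minus_distr_l. unfold Rminus at 1. rewrite <- sumN_opp, <- sumN_plus.
  rewrite Rabs_mult, Rabs_right by (apply Rle_ge, Rlt_le, Rinv_0_lt_compat; lra).
  eapply Rle_trans.
  { apply Rmult_le_compat_l; [apply Rlt_le, Rinv_0_lt_compat; lra| apply Rabs_sumN]. }
  eapply Rle_trans.
  { apply Rmult_le_compat_l; [apply Rlt_le, Rinv_0_lt_compat; lra|].
    apply (sumN_le N _ (fun _ => Dm * (t' - t))). intros i Hi.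
    replace (1 + cos (theta i t') + - (1 + cos (theta i t))) with (cos (theta i t') - cos (theta i t)) by ring.
    eapply Rle_trans; [apply cos_lip| apply th_lip; auto]. }
  rewrite sumN_const. rewrite <- Rmult_assoc, Rinv_l by lra. lra.
Qed.

Definition Lip := 3 * kappa * Dm.

Lemma dth_lip i t t' : (i < N)%nat -> 0 <= t <= t' -> Rabs (dth i t' - dth i t) <= Lip * (t' - t).
Proof.
  intros Hi Ht. unfold dth, Lip. pose proof kappa_pos. pose proof (Rt_bounds t).
  replace (omega i - kappa * Rt t' * sin (theta i t') - (omega i - kappa * Rt t * sin (theta i t)))
    with (- kappa * ((Rt t' - Rt t) * sin (theta i t') + Rt t * (sin (theta i t') - sin (theta i t)))) by ring.
  rewrite Rabs_mult, Rabs_Ropp, Rabs_right by lra.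
  replace (3 * kappa * Dm * (t' - t)) with (kappa * (Dm * (t' - t) + 2 * (Dm * (t' - t)))) by ring.
  apply Rmult_le_compat_l; [lra|].
  eapply Rle_trans; [apply Rabs_triang|]. rewrite !Rabs_mult.
  apply Rplus_le_compat.
  - rewrite <- (Rmult_1_r (Dm * (t' - t))). apply Rmult_le_compat; try apply Rabs_pos.
    + apply Rt_lip; auto.
    + apply Rabs_le, SIN_bound.
  - apply Rmult_le_compat; try apply Rabs_pos.
    + rewrite Rabs_right; lra.
    + eapply Rle_trans; [apply sin_lip| apply th_lip; auto].
Qed.

Lemma th_bounded : exists B, forall i, (i < N)%nat -> forall t, 0 <= t -> Rabs (theta i t) <= B.
Proof.
  apply (unif_exists (fun i B => forall t, 0 <= t -> Rabs (theta i t) <= B)).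
  - intros i B B' HB H t Ht. specialize (H t Ht); lra.
  - intros i Hi. destruct (range_b i Hi) as [a [b [_ Hab]]].
    exists (Rmax (Rabs a) (Rabs b)). intros t Ht. destruct (Hab t Ht).
    apply Rabs_le. split.
    + assert (- Rabs a <= a) by (pose proof (Rabs_pos a); apply Rabs_le_between, Rle_refl || (unfold Rabs; destruct (Rcase_abs a); lra)).
      pose proof (Rmax_l (Rabs a) (Rabs b)). lra.
    + assert (b <= Rabs b) by apply Rle_abs. pose proof (Rmax_r (Rabs a) (Rabs b)). lra.
Qed.

Definition Ssum t := sumN N (fun j => 1 + cos (theta j t)).
Definition Vf t := - sumN N (fun i => omega i * theta i t) - kappa / (2 * INR N) * (Ssum t * Ssum t).
Definition dVf t := - sumN N (fun i => dth i t * dth i t).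

Lemma Rt_Ssum t : Rt t = / INR N * Ssum t.
Proof. reflexivity. Qed.

Lemma Vf_der t : 0 <= t -> is_derive Vf t (dVf t).
Proof.
  intros Ht. pose proof INR_N_pos.
  set (A := sumN N (fun i => omega i * dth i t)).
  set (B := sumN N (fun j => - sin (theta j t) * dth j t)).
  assert (HA : is_derive (fun x => sumN N (fun i => omega i * theta i x)) t A).
  { apply (is_derive_sumN N (fun i x => omega i * theta i x)). intros i Hi.
    apply der_scal_l, th_der; auto. }
  assert (HB : is_derive Ssum t B).
  { unfold Ssum. apply (is_derive_sumN N (fun j x => 1 + cos (theta j x))). intros i Hi.
    apply der_plus_const, cos_th_der; auto. }
  assert (Heq : dVf t = - A - kappa / (2 * INR N) * (B * Ssum t + Ssum t * B)).
  { unfold dVf, A, B.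
    rewrite (sumN_ext N (fun i => dth i t * dth i t)
      (fun i => omega i * dth i t + kappa * Rt t * (- sin (theta i t) * dth i t))).
    2:{ intros i Hi. unfold dth at 1. ring. }
    rewrite sumN_plus, sumN_scal. rewrite Rt_Ssum. field. lra. }
  rewrite Heq. unfold Vf.
  apply is_derive_Reals.
  apply (derivable_pt_lim_minus (fun x => - sumN N (fun i => omega i * theta i x))
          (fun x => kappa / (2 * INR N) * (Ssum x * Ssum x))).
  - apply (derivable_pt_lim_opp (fun x => sumN N (fun i => omega i * theta i x))). apply is_derive_Reals; auto.
  - apply (derivable_pt_lim_scal (fun x => Ssum x * Ssum x)).
    apply (derivable_pt_lim_mult Ssum Ssum); apply is_derive_Reals; auto.
Qed.

Lemma dVf_le i t : (i < N)%nat -> dVf t <= - (dth i t * dth i t).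
Proof.
  intros Hi. unfold dVf. assert (dth i t * dth i t <= sumN N (fun i => dth i t * dth i t)); [|lra].
  apply (sumN_ge_term N (fun i => dth i t * dth i t)); auto. intros; nra.
Qed.

Lemma Vf_nonincr t t' : 0 <= t <= t' -> Vf t' <= Vf t.
Proof.
  intros Ht. destruct (Req_dec t t') as [->|Hne]; [lra|].
  destruct (MVT_cor2 Vf dVf t t') as [c [Hc1 Hc2]]; [lra| intros; apply is_derive_Reals, Vf_der; lra|].
  assert (dVf c <= 0) by (eapply Rle_trans; [apply (dVf_le 0); lia| nra]).
  assert (dVf c * (t' - t) <= 0) by (apply Rmult_le_0_r; lra). lra.
Qed.

Lemma Vf_lower : exists Vm, forall t, 0 <= t -> Vm <= Vf t.
Proof.
  destruct th_bounded as [B HB]. pose proof INR_N_pos. pose proof kappa_pos.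
  exists (- (INR N * (W * B)) - kappa / (2 * INR N) * ((2 * INR N) * (2 * INR N))).
  intros t Ht. unfold Vf.
  assert (H1 : sumN N (fun i => omega i * theta i t) <= INR N * (W * B)).
  { rewrite <- sumN_const. apply sumN_le. intros i Hi.
    eapply Rle_trans; [apply Rle_abs|]. rewrite Rabs_mult.
    apply Rmult_le_compat; try apply Rabs_pos; [apply W_ge| apply HB]; auto. }
  assert (H2 : 0 <= Ssum t <= 2 * INR N).
  { pose proof (Rt_bounds t). rewrite Rt_Ssum in H1 || idtac. rewrite Rt_Ssum in H2.
    split.
    - assert (0 <= INR N * (/ INR N * Ssum t)) by (apply Rmult_le_pos; lra).
      rewrite <- Rmult_assoc, Rinv_r, Rmult_1_l in H3 by lra. auto.
    - assert (INR N * (/ INR N * Ssum t) <= INR N * 2) by (apply Rmult_le_compat_l; lra).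
      rewrite <- Rmult_assoc, Rinv_r, Rmult_1_l in H3 by lra. lra. }
  assert (Ssum t * Ssum t <= (2 * INR N) * (2 * INR N)) by (apply Rmult_le_compat; lra).
  assert (0 < kappa / (2 * INR N)) by (apply Rdiv_lt_0_compat; lra).
  assert (kappa / (2 * INR N) * (Ssum t * Ssum t) <= kappa / (2 * INR N) * ((2 * INR N) * (2 * INR N)))
    by (apply Rmult_le_compat_l; lra).
  lra.
Qed.

Lemma dth_to0 i : (i < N)%nat -> forall eps, 0 < eps -> exists M, 0 <= M /\ forall t, M <= t -> Rabs (dth i t) < eps.
Proof.
  intros Hi eps Heps. apply NNPP; intros Hno.
  assert (Hinf : forall M, 0 <= M -> exists t, M <= t /\ eps <= Rabs (dth i t)).
  { intros M HM. apply NNPP; intros Hn. apply Hno. exists M; split; auto. intros t Ht.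
    destruct (Rlt_dec (Rabs (dth i t)) eps); auto. exfalso; apply Hn; exists t; split; auto; lra. }
  pose proof kappa_pos. pose proof W_pos.
  assert (HLp : 0 < Lip) by (unfold Lip, Dm; apply Rmult_lt_0_compat; lra).
  set (del := eps / (2 * Lip)).
  assert (Hdel : 0 < del) by (unfold del; apply Rdiv_lt_0_compat; lra).
  set (c := eps * eps / 4 * del).
  assert (Hc : 0 < c) by (unfold c; apply Rmult_lt_0_compat; [nra| lra]).
  assert (Hstep : forall T, 0 <= T -> exists T', T <= T' /\ Vf T' <= Vf T - c).
  { intros T HT. destruct (Hinf T HT) as [t [Ht1 Ht2]].
    exists (t + del). split; [lra|].
    assert (Hbig : forall u, t <= u <= t + del -> eps / 2 <= Rabs (dth i u)).
    { intros u Hu. pose proof (dth_lip i t u Hi ltac:(lra)).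
      assert (Lip * (u - t) <= Lip * del) by (apply Rmult_le_compat_l; lra).
      assert (Lip * del = eps / 2) by (unfold del; field; lra).
      pose proof (Rabs_triang_inv (dth i t) (dth i u)). rewrite Rabs_minus_sym in H1. lra. }
    destruct (MVT_cor2 Vf dVf t (t + del)) as [xi [Hxi1 Hxi2]]; [lra| intros; apply is_derive_Reals, Vf_der; lra|].
    pose proof (dVf_le i xi Hi). pose proof (Hbig xi ltac:(lra)).
    assert (eps / 2 * (eps / 2) <= dth i xi * dth i xi).
    { assert (Hsq : Rabs (dth i xi) * Rabs (dth i xi) = dth i xi * dth i xi) by (rewrite <- Rabs_mult; apply Rabs_pos_eq; nra).
      rewrite <- Hsq. apply Rmult_le_compat; lra. }
    replace (t + del - t) with del in Hxi1 by ring.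
    assert (dVf xi * del <= - (eps * eps / 4) * del) by (apply Rmult_le_compat_r; lra).
    pose proof (Vf_nonincr T t ltac:(lra)). unfold c. lra. }
  assert (Hn : forall n : nat, exists T, 0 <= T /\ Vf T <= Vf 0 - INR n * c).
  { induction n.
    - exists 0; simpl; lra.
    - destruct IHn as [T [HT HVT]]. destruct (Hstep T HT) as [T' [HT' HV']].
      exists T'; split; [lra|]. rewrite S_INR. lra. }
  destruct Vf_lower as [Vm HVm].
  destruct (INR_archimed c (Vf 0 - Vm) Hc) as [n Hn'].
  destruct (Hn n) as [T [HT HVT]]. pose proof (HVm T HT). lra.
Qed.

Lemma Rt_pos t : 0 <= t -> Rt 0 - mu <= Rt t /\ 0 < Rt t.
Proof. intros Ht. pose proof (part_a t Ht). split; lra. Qed.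

Lemma W_lt_kr r : Rt 0 - mu <= r -> W < kappa * r * s /\ kappa * r * s < kappa * r.
Proof.
  intros Hr. pose proof kappa_pos. pose proof s_pos. pose proof s_lt1.
  assert (kappa * (Rt 0 - mu) * s <= kappa * r * s).
  { apply Rmult_le_compat_r; [lra|]. apply Rmult_le_compat_l; lra. }
  split; [lra|]. assert (0 < kappa * r) by (apply Rmult_lt_0_compat; lra).
  rewrite <- (Rmult_1_r (kappa * r)) at 2. apply Rmult_lt_compat_l; lra.
Qed.

Lemma ratio_lt1 i r : (i < N)%nat -> Rt 0 - mu <= r -> (omega i / (kappa * r)) ^ 2 < 1.
Proof.
  intros Hi Hr. destruct (W_lt_kr r Hr). pose proof (W_ge i Hi). pose proof kappa_pos.
  assert (Hkr : 0 < kappa * r) by (apply Rmult_lt_0_compat; lra).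
  assert (Rabs (omega i / (kappa * r)) < 1).
  { unfold Rdiv. rewrite Rabs_mult, Rabs_inv, (Rabs_right (kappa * r)) by lra.
    apply (Rmult_lt_reg_r (kappa * r)); auto. rewrite Rmult_assoc, Rinv_l, Rmult_1_l, Rmult_1_r by lra. lra. }
  rewrite <- Rsqr_pow2, Rsqr_abs. pose proof (Rabs_pos (omega i / (kappa * r))). unfold Rsqr. nra.
Qed.

Lemma sin_formula i t : (i < N)%nat -> 0 <= t -> sin (theta i t) = (omega i - dth i t) / (kappa * Rt t).
Proof.
  intros Hi Ht. destruct (Rt_pos t Ht). pose proof kappa_pos. unfold dth. field. split; lra.
Qed.

Lemma branches : exists T, 0 <= T /\ forall i, (i < N)%nat ->
   (forall t, T <= t -> 1 - mu <= cos (theta i t)) \/ (forall t, 0 <= t -> cos (theta i t) < -1 + mu).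
Proof.
  destruct (unif_exists (fun i T => 0 <= T /\ ((forall t, T <= t -> 1 - mu <= cos (theta i t)) \/
                                                (forall t, 0 <= t -> cos (theta i t) < -1 + mu))) N) as [T HT].
  - intros i B B' HB [H0 H1]. split; [lra|]. destruct H1 as [HA|HB']; [left; intros; apply HA; lra| right; auto].
  - intros i Hi. destruct (classify i) as [[t0 [Ht0 Hc]]|HB].
    + exists (t0 + tau). pose proof tau_pos. split; [lra|]. left. intros t Ht.
      destruct (part_c i t0 Hi Ht0 (Rle_ge _ _ Hc)) as [_ H2]. apply Rge_le, H2; lra.
    + exists 0. split; [lra| right; auto].
  - exists T. split; [apply (HT 0%nat); lia|]. intros i Hi. apply HT; auto.
Qed.

Lemma sq_small (d : R) : (forall e, 0 < e -> Rabs d <= e) -> d = 0.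
Proof.
  intros H. destruct (Req_dec d 0) as [|Hne]; auto. exfalso.
  pose proof (Rabs_pos_lt d Hne). specialize (H (Rabs d / 2) ltac:(lra)). lra.
Qed.

Lemma recur T (eps : nat -> R) : 0 <= T ->
  (forall i, Rabs (eps i) <= 1) ->
  (forall i, (i < N)%nat -> forall t, T <= t -> cos (theta i t) = eps i * sqrt (1 - (sin (theta i t))²)) ->
  forall r, Rt 0 - mu <= r -> (forall M, exists t, M <= t /\ Rt t = r) ->
  r = 1 + / INR N * sumN N (fun i => eps i * sqrt (1 - ((omega i - 0) / (kappa * r)) ^ 2)).
Proof.
  intros HT Heps Hcos r Hr Hrec. pose proof INR_N_pos. pose proof kappa_pos.
  assert (Hkr : 0 < kappa * r) by (apply Rmult_lt_0_compat; lra).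
  set (h := fun i y => sqrt (1 - ((omega i - y) / (kappa * r)) ^ 2)).
  assert (Hlim : forall i, (i < N)%nat -> is_lim (fun t => h i (dth i t)) p_infty (h i 0)).
  { intros i Hi. apply (lim_cont_comp (dth i) (h i) 0).
    - apply lim_of_eps. intros e He. destruct (dth_to0 i Hi e He) as [M [_ HM]].
      exists M; intros t Ht. rewrite Rminus_0_r. apply HM; auto.
    - unfold h. apply h_cont; [lra| apply ratio_lt1; auto]. }
  apply Rminus_diag_uniq. apply sq_small. intros e He.
  destruct (unif_exists (fun i M => forall t, M <= t -> Rabs (h i (dth i t) - h i 0) < e) N) as [M HM].
  { intros i B B' HB Hh t Ht. apply Hh; lra. }
  { intros i Hi. destruct (eps_of_lim _ _ (Hlim i Hi) e He) as [M HM]. exists M; auto. }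
  destruct (Hrec (Rmax M T)) as [t [Ht Hrt]].
  assert (HtM : M <= t) by (eapply Rle_trans; [apply Rmax_l| eauto]).
  assert (HtT : T <= t) by (eapply Rle_trans; [apply Rmax_r| eauto]).
  assert (Hr1 : r = / INR N * sumN N (fun i => 1 + eps i * h i (dth i t))).
  { rewrite <- Hrt at 1. unfold order_param. f_equal. apply sumN_ext. intros i Hi.
    rewrite (Hcos i Hi t HtT). unfold h. rewrite (sin_formula i t Hi ltac:(lra)), Hrt.
    rewrite Rsqr_pow2. reflexivity. }
  assert (Hsplit : forall g : nat -> R, / INR N * sumN N (fun i => 1 + g i) = 1 + / INR N * sumN N g).
  { intros g. rewrite sumN_plus, sumN_const. field. lra. }
  rewrite Hsplit in Hr1.
  replace (r - (1 + / INR N * sumN N (fun i => eps i * sqrt (1 - ((omega i - 0) / (kappa * r)) ^ 2))))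
    with (/ INR N * sumN N (fun i => eps i * (h i (dth i t) - h i 0))).
  2:{ change (fun i => eps i * sqrt (1 - ((omega i - 0) / (kappa * r)) ^ 2)) with (fun i => eps i * h i 0).
      rewrite Hr1 at 1.
      rewrite (sumN_ext N (fun i => eps i * (h i (dth i t) - h i 0)) (fun i => eps i * h i (dth i t) + - (eps i * h i 0))) by (intros; ring).
      rewrite sumN_plus, sumN_opp. ring. }
  rewrite Rabs_mult, Rabs_right by (apply Rle_ge, Rlt_le, Rinv_0_lt_compat; lra).
  eapply Rle_trans.
  { apply Rmult_le_compat_l; [apply Rlt_le, Rinv_0_lt_compat; lra|]. eapply Rle_trans; [apply Rabs_sumN|].
    apply (sumN_le N _ (fun _ => e)). intros i Hi. rewrite Rabs_mult.
    pose proof (HM i Hi t HtM). pose proof (Heps i). pose proof (Rabs_pos (eps i)).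
    rewrite <- (Rmult_1_l e). apply Rmult_le_compat; try apply Rabs_pos; lra. }
  rewrite sumN_const. rewrite <- Rmult_assoc, Rinv_l by lra. lra.
Qed.


Lemma no_plateau (eps : nat -> R) li ls : Rt 0 - mu <= li < ls ->
  (forall r, li < r < ls -> r = 1 + / INR N * sumN N (fun i => eps i * sqrt (1 - ((omega i - 0) / (kappa * r)) ^ 2))) ->
  False.
Proof.
  intros Hl Hr. pose proof INR_N_pos. pose proof kappa_pos.
  assert (Hli : 0 < li) by lra.
  set (a := fun i => (omega i / kappa) ^ 2).
  set (L := cons (INR N, 0) (map (fun i => (eps i, a i)) (seq 0 N))).
  apply (no_interval L (INR N) (li * li) (ls * ls)); try nra.
  - intros ca Hca. unfold L in Hca. destruct Hca as [<-|Hca]; [simpl; nra|].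
    apply in_map_iff in Hca. destruct Hca as [i [Heq Hi]]. rewrite <- Heq. apply in_seq in Hi. simpl.
    pose proof (ratio_lt1 i li ltac:(lia) ltac:(lra)) as Hrat.
    unfold a. replace ((omega i / kappa) ^ 2) with ((omega i / (kappa * li)) ^ 2 * (li * li)) by (field; lra).
    assert (0 < li * li) by nra.
    rewrite <- (Rmult_1_l (li * li)) at 2. apply Rmult_lt_compat_r; lra.
  - intros v Hv.
    assert (Hv0 : 0 < v) by nra.
    set (r := sqrt v).
    assert (Hrr : r * r = v) by (apply sqrt_sqrt; lra).
    assert (Hr0 : 0 < r) by (apply sqrt_lt_R0; lra).
    assert (Hrange : li < r < ls).
    { split.
      - rewrite <- (sqrt_square li) by lra. apply sqrt_lt_1; nra.
      - rewrite <- (sqrt_square ls) by lra. apply sqrt_lt_1; nra. }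
    pose proof (Hr r Hrange) as Hrec.
    unfold L. simpl sumL. rewrite sumL_seq. simpl fst. simpl snd. rewrite Rminus_0_r. fold r.
    rewrite (sumN_ext N (fun i => eps i * sqrt (v - a i))
               (fun i => r * (eps i * sqrt (1 - ((omega i - 0) / (kappa * r)) ^ 2)))).
    2:{ intros i Hi. unfold a.
        replace (v - (omega i / kappa) ^ 2) with ((r * r) * (1 - ((omega i - 0) / (kappa * r)) ^ 2)) by (rewrite <- Hrr; field; lra).
        rewrite sqrt_mult_alt by nra. rewrite sqrt_square by lra. ring. }
    rewrite sumN_scal.
    assert (Hs : sumN N (fun i => eps i * sqrt (1 - ((omega i - 0) / (kappa * r)) ^ 2)) = INR N * (r - 1)).
    { apply (Rmult_eq_reg_l (/ INR N)); [|apply Rinv_neq_0_compat; lra].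
      rewrite <- Rmult_assoc, Rinv_l, Rmult_1_l by lra. lra. }
    rewrite Hs. rewrite <- Hrr. ring.
Qed.


Lemma nat_above M : exists n : nat, M <= INR n.
Proof. destruct (INR_archimed 1 M) as [n Hn]; [lra|]. exists n. lra. Qed.

Lemma R_lim_seq : exists Rinf : R, is_lim_seq (fun n => Rt (INR n)) Rinf /\ Rt 0 - mu <= Rinf.
Proof.
  destruct branches as [T [HT Hbr]].
  set (eps := fun i => if Rle_dec 0 (cos (theta i T)) then 1 else -1).
  assert (Heps : forall i, Rabs (eps i) <= 1).
  { intros i. unfold eps. destruct (Rle_dec 0 (cos (theta i T))); [rewrite Rabs_R1| rewrite Rabs_left, ?Ropp_involutive]; lra. }
  assert (Hcos : forall i, (i < N)%nat -> forall t, T <= t -> cos (theta i t) = eps i * sqrt (1 - (sin (theta i t))²)).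
  { intros i Hi t Ht. unfold eps. destruct (Hbr i Hi) as [HA|HB].
    - destruct (Rle_dec 0 (cos (theta i T))) as [_|Hn]; [|pose proof (HA T ltac:(lra)); lra].
      rewrite Rmult_1_l. apply Rtrigo_facts.cos_sin. pose proof (HA t Ht); lra.
    - destruct (Rle_dec 0 (cos (theta i T))) as [Hn|_]; [pose proof (HB T HT); lra|].
      replace (-1 * sqrt (1 - (sin (theta i t))²)) with (- sqrt (1 - (sin (theta i t))²)) by ring. apply Rtrigo_facts.cos_sin_opp. pose proof (HB t ltac:(lra)); lra. }
  set (u := fun n => Rt (INR n)).
  assert (Hu : forall n, Rt 0 - mu <= u n <= 2).
  { intros n. unfold u. split; [apply part_a, pos_INR| apply Rt_bounds]. }
  destruct (ex_LimSup_seq u) as [ls Hls]. destruct (ex_LimInf_seq u) as [li Hli].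
  pose proof (is_LimSup_LimInf_seq_le u ls li Hls Hli) as Hle.
  destruct ls as [ls| |].
  2:{ exfalso. destruct (Hls 2 0%nat) as [n [_ Hn]]. pose proof (Hu n). lra. }
  2:{ exfalso. destruct (Hls 0) as [N0 HN0]. pose proof (HN0 N0 (le_n _)). pose proof (Hu N0). lra. }
  destruct li as [li| |].
  2:{ exfalso. destruct (Hli 2) as [N0 HN0]. pose proof (HN0 N0 (le_n _)). pose proof (Hu N0). lra. }
  2:{ exfalso. destruct (Hli 0 0%nat) as [n [_ Hn]]. pose proof (Hu n). lra. }
  simpl in Hle.
  assert (Hli0 : Rt 0 - mu <= li).
  { destruct (Rle_dec (Rt 0 - mu) li) as [|Hn]; auto. exfalso.
    assert (He : 0 < Rt 0 - mu - li) by lra.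
    destruct (proj1 (Hli (mkposreal _ He)) 0%nat) as [n [_ Hn']]. simpl in Hn'. pose proof (Hu n). lra. }
  destruct (Req_dec li ls) as [Heq|Hne].
  - exists li. split; auto. apply is_LimSup_LimInf_lim_seq; auto. rewrite Heq; auto.
  - exfalso. apply (no_plateau eps li ls); [lra|].
    intros r Hr. apply (recur T eps); auto; [lra|].
    intros M. destruct (nat_above (Rmax M 0)) as [N0 HN0].
    assert (He1 : 0 < ls - r) by lra. assert (He2 : 0 < r - li) by lra.
    destruct (proj1 (Hls (mkposreal _ He1)) N0) as [n1 [Hn1 Hu1]]. simpl in Hu1.
    destruct (proj1 (Hli (mkposreal _ He2)) N0) as [n2 [Hn2 Hu2]]. simpl in Hu2.
    apply le_INR in Hn1. apply le_INR in Hn2.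
    assert (HM0 : M <= INR N0 /\ 0 <= INR N0) by (pose proof (Rmax_l M 0); pose proof (Rmax_r M 0); split; lra).
    unfold u in Hu1, Hu2.
    destruct (Rle_dec (INR n1) (INR n2)).
    + destruct (first_time (fun x => - Rt x) (INR n1) (INR n2) (- r)) as [c [Hc1 [Hc2 _]]]; try lra.
      * intros x Hx; apply continuity_pt_opp, Rt_cont; lra.
      * exists c. split; lra.
    + destruct (first_time Rt (INR n2) (INR n1) r) as [c [Hc1 [Hc2 _]]]; try lra.
      * intros x Hx; apply Rt_cont; lra.
      * exists c. split; lra.
Qed.


Lemma Rt_der t : 0 <= t -> is_derive Rt t (/ INR N * sumN N (fun j => - sin (theta j t) * dth j t)).
Proof.
  intros Ht. change Rt with (fun x => / INR N * Ssum x).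
  apply der_scal_l. unfold Ssum. apply (is_derive_sumN N (fun j x => 1 + cos (theta j x))). intros i Hi.
  apply der_plus_const, cos_th_der; auto.
Qed.

Lemma Rt_der_small e : 0 < e -> exists M, 0 <= M /\ forall t, M <= t ->
  Rabs (/ INR N * sumN N (fun j => - sin (theta j t) * dth j t)) <= e.
Proof.
  intros He. pose proof INR_N_pos.
  destruct (unif_exists (fun i M => 0 <= M /\ forall t, M <= t -> Rabs (dth i t) < e) N) as [M HM].
  { intros i B B' HB [H0 H1]. split; [lra|]. intros; apply H1; lra. }
  { intros i Hi. destruct (dth_to0 i Hi e He) as [M [HM0 HM]]. exists M; split; auto. }
  exists M. split; [apply (HM 0%nat); lia|]. intros t Ht.
  rewrite Rabs_mult, Rabs_right by (apply Rle_ge, Rlt_le, Rinv_0_lt_compat; lra).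
  eapply Rle_trans.
  { apply Rmult_le_compat_l; [apply Rlt_le, Rinv_0_lt_compat; lra|]. eapply Rle_trans; [apply Rabs_sumN|].
    apply (sumN_le N _ (fun _ => e)). intros i Hi. rewrite Rabs_mult.
    pose proof (proj2 (HM i Hi) t Ht). assert (Rabs (- sin (theta i t)) <= 1) by (rewrite Rabs_Ropp; apply Rabs_le, SIN_bound).
    rewrite <- (Rmult_1_l e). apply Rmult_le_compat; try apply Rabs_pos; lra. }
  rewrite sumN_const. rewrite <- Rmult_assoc, Rinv_l by lra. lra.
Qed.

Lemma R_lim : exists Rinf : R, is_lim Rt p_infty Rinf /\ Rt 0 - mu <= Rinf.
Proof.
  destruct R_lim_seq as [Rinf [Hseq HRinf]]. exists Rinf. split; auto.
  apply lim_of_eps. intros e He.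
  apply is_lim_seq_spec in Hseq.
  assert (He2 : 0 < e / 2) by lra.
  destruct (Hseq (mkposreal _ He2)) as [N1 HN1]. simpl in HN1.
  destruct (Rt_der_small (e / 2) He2) as [M [HM0 HM]].
  exists (Rmax (INR N1) M + 1). intros t Ht.
  pose proof (Rmax_l (INR N1) M). pose proof (Rmax_r (INR N1) M). pose proof (pos_INR N1).
  destruct (Zfloor_bound t) as [Hf1 Hf2].
  assert (Hz : (0 <= Zfloor t)%Z) by (apply Zfloor_lub; simpl; lra).
  set (n := Z.to_nat (Zfloor t)).
  assert (Hn : INR n = IZR (Zfloor t)) by (unfold n; rewrite INR_IZR_INZ, Z2Nat.id; auto).
  assert (HnN : (N1 <= n)%nat).
  { apply INR_le. lra. }
  specialize (HN1 n HnN).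
  assert (Hlip : Rabs (Rt t - Rt (INR n)) <= e / 2 * (t - INR n)).
  { apply (lip_deriv Rt (fun x => / INR N * sumN N (fun j => - sin (theta j x) * dth j x))); try lra.
    - intros x Hx. apply Rt_der. lra.
    - intros x Hx. apply HM. lra. }
  assert (e / 2 * (t - INR n) <= e / 2) by (rewrite <- (Rmult_1_r (e/2)) at 2; apply Rmult_le_compat_l; lra).
  replace (Rt t - Rinf) with ((Rt t - Rt (INR n)) + (Rt (INR n) - Rinf)) by ring.
  eapply Rle_lt_trans; [apply Rabs_triang|]. lra.
Qed.


Section Conv.
Variable Rinf : R.
Hypothesis HRl : is_lim Rt p_infty Rinf.
Hypothesis HRinf : Rt 0 - mu <= Rinf.

Lemma dth_lim i : (i < N)%nat -> is_lim (dth i) p_infty 0.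
Proof.
  intros Hi. apply lim_of_eps. intros e He. destruct (dth_to0 i Hi e He) as [M [_ HM]].
  exists M; intros t Ht. rewrite Rminus_0_r. apply HM; auto.
Qed.

Lemma sin_lim i : (i < N)%nat -> is_lim (fun t => sin (theta i t)) p_infty (omega i / (kappa * Rinf)).
Proof.
  intros Hi. pose proof kappa_pos.
  apply (lim_ext_tail (fun t => (omega i - dth i t) * / (kappa * Rt t)) _ _ 0).
  { intros t Ht. rewrite sin_formula; auto. }
  replace (omega i / (kappa * Rinf)) with ((omega i - 0) * / (kappa * Rinf)) by (unfold Rdiv; ring).
  apply lim_mult_R.
  - apply lim_minus_R; [apply lim_const_R| apply dth_lim; auto].
  - apply lim_inv_R; [apply Rgt_not_eq, Rmult_lt_0_compat; lra|].
    apply (lim_mult_R (fun _ => kappa) Rt). apply lim_const_R. auto.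
Qed.

Lemma x_bound i : (i < N)%nat -> -1 < omega i / (kappa * Rinf) < 1.
Proof.
  intros Hi. pose proof (ratio_lt1 i Rinf Hi HRinf).
  set (x := omega i / (kappa * Rinf)) in *. split; nra.
Qed.

Lemma theta_lim_A i : (i < N)%nat -> (exists t0, 0 <= t0 /\ -1 + mu <= cos (theta i t0)) ->
  exists k : Z, is_lim (theta i) p_infty (asin (omega i / (kappa * Rinf)) + 2 * IZR k * PI).
Proof.
  intros Hi [t0 [Ht0 Hc]]. destruct (arc_fix i t0 Hi Ht0 Hc) as [k Hka].
  exists k.
  apply (lim_ext_tail (fun t => asin (sin (theta i t)) + 2 * IZR k * PI) _ _ (t0 + tau)).
  { intros t Ht. destruct (Hka t Ht) as [H1 _].
    assert (sin (theta i t) = sin (theta i t - 2 * IZR k * PI)) by (rewrite <- (sinZ (theta i t - 2 * IZR k * PI) k); f_equal; ring).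
    rewrite H, asin_sin by lra. ring. }
  apply lim_plus_const. apply (lim_cont_comp _ asin). apply sin_lim; auto. apply asin_cont, x_bound; auto.
Qed.

Lemma theta_lim_B i : (i < N)%nat -> (forall t, 0 <= t -> cos (theta i t) < -1 + mu) ->
  exists k : Z, is_lim (theta i) p_infty (PI - asin (omega i / (kappa * Rinf)) + 2 * IZR k * PI).
Proof.
  intros Hi HB. pose proof PI_RGT_0.
  destruct (cos_neg_arc (theta i 0)) as [k Hk0]; [pose proof (HB 0 ltac:(lra)); lra|].
  assert (Hin : forall t, 0 <= t -> 2 * IZR k * PI + PI/2 < theta i t < 2 * IZR k * PI + 3 * (PI/2)).
  { intros t Ht. apply (stay (theta i) 0 t); auto; try lra.
    - intros x Hx; apply th_cont; auto; lra.
    - intros x Hx. pose proof (HB x ltac:(lra)). split; intros He; rewrite He in H0.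
      + replace (2 * IZR k * PI + PI / 2) with (IZR (2 * k) * PI + PI/2) in H0 by (rewrite mult_IZR; simpl; ring).
        rewrite cos_oddPI2 in H0; lra.
      + replace (2 * IZR k * PI + 3 * (PI / 2)) with (IZR (2 * k + 1) * PI + PI/2) in H0
          by (rewrite plus_IZR, mult_IZR; simpl; field). rewrite cos_oddPI2 in H0; lra. }
  exists k.
  apply (lim_ext_tail (fun t => PI - asin (sin (theta i t)) + 2 * IZR k * PI) _ _ 0).
  { intros t Ht. pose proof (Hin t Ht).
    set (y := theta i t - 2 * IZR k * PI - PI).
    assert (Hy : sin y = - sin (theta i t)).
    { unfold y. rewrite sin_minus_PI. f_equal. rewrite <- (sinZ _ k). f_equal; ring. }
    assert (Hasin : asin (sin y) = y) by (apply asin_sin; unfold y; lra).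
    rewrite Hy, asin_opp in Hasin. unfold y in Hasin. lra. }
  apply lim_plus_const.
  apply (lim_minus_R (fun _ => PI) (fun t => asin (sin (theta i t)))); [apply lim_const_R|].
  apply (lim_cont_comp _ asin). apply sin_lim; auto. apply asin_cont, x_bound; auto.
Qed.


Lemma notP_A i : (i < N)%nat ->
  ~ (exists c : R, c < -1 + mu /\ forall t, 0 <= t -> cos (theta i t) <= c) ->
  exists t0, 0 <= t0 /\ -1 + mu <= cos (theta i t0).
Proof.
  intros Hi HnP. destruct (classify i) as [HA|HB]; auto. exfalso. apply HnP.
  destruct (theta_lim_B i Hi HB) as [k Hk0].
  set (x := omega i / (kappa * Rinf)) in *.
  pose proof (lim_cont_comp _ cos _ Hk0 (cos_cont _)) as Hc.
  set (cL := cos (PI - asin x + 2 * IZR k * PI)) in *.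
  assert (HcL : cL = - sqrt (1 - x ^ 2)).
  { unfold cL. rewrite cosZ, Rtrigo_facts.cos_pi_minus, cos_asin by (pose proof (x_bound i Hi); fold x in H; lra).
    rewrite Rsqr_pow2; reflexivity. }
  assert (Hx2 : x ^ 2 < s * s).
  { destruct (W_lt_kr Rinf HRinf) as [H1 _]. pose proof (W_ge i Hi). pose proof kappa_pos. pose proof s_pos.
    assert (Hkr : 0 < kappa * Rinf) by (apply Rmult_lt_0_compat; lra).
    assert (Rabs x < s).
    { unfold x, Rdiv. rewrite Rabs_mult, Rabs_inv, (Rabs_right (kappa * Rinf)) by lra.
      apply (Rmult_lt_reg_r (kappa * Rinf)); auto. rewrite Rmult_assoc, Rinv_l, Rmult_1_r by lra. lra. }
    rewrite <- Rsqr_pow2, Rsqr_abs. pose proof (Rabs_pos x). unfold Rsqr. nra. }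
  assert (HcLlt : cL < -1 + mu).
  { rewrite HcL. rewrite s_sq in Hx2.
    assert (1 - mu < sqrt (1 - x ^ 2)).
    { rewrite <- (sqrt_square (1 - mu)) by lra. apply sqrt_lt_1; nra. }
    lra. }
  set (del := (-1 + mu - cL) / 2).
  destruct (eps_of_lim _ _ Hc del ltac:(unfold del; lra)) as [M HM].
  set (M' := Rmax M 0).
  destruct (continuity_ab_maj (fun t => cos (theta i t)) 0 M' ltac:(apply Rmax_r)) as [tm [Htm2 Htm1]].
  { intros c Hc'; apply cos_th_cont; auto; lra. }
  exists (Rmax (cL + del) (cos (theta i tm))). split.
  { apply Rmax_case_strong; intros; [unfold del; lra| apply HB; lra]. }
  intros t Ht. destruct (Rle_dec t M').
  - eapply Rle_trans; [apply Htm2; lra| apply Rmax_r].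
  - assert (M <= t) by (pose proof (Rmax_l M 0); fold M' in H; lra).
    specialize (HM t H). apply Rabs_def2 in HM.
    eapply Rle_trans; [|apply Rmax_l]. lra.
Qed.
End Conv.


Theorem main_sec :
  let tau := PI / (kappa * (Rt 0 - mu) * s - W) in
  let lam := kappa * (Rt 0 - mu) * (1 - mu) in
  (forall t, 0 <= t -> Rt t >= Rt 0 - mu) /\
  (forall i, (i < N)%nat ->
     (exists L : R, is_lim (theta i) p_infty (Finite L)) /\
     (exists a b : R, b - a < 2 * PI /\
        forall t, 0 <= t -> a <= theta i t <= b) /\
     is_lim (fun t => Derive (theta i) t) p_infty (Finite 0)) /\
  (forall i t0, (i < N)%nat -> 0 <= t0 -> cos (theta i t0) >= -1 + mu ->
     (forall t, t >= t0 -> cos (theta i t) >= -1 + mu) /\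
     (forall t, t >= t0 + tau -> cos (theta i t) >= 1 - mu)) /\
  (exists Rinf : R, is_lim Rt p_infty (Finite Rinf) /\
     forall i, (i < N)%nat ->
       let P := exists c : R, c < -1 + mu /\
                  forall t, 0 <= t -> cos (theta i t) <= c in
       (P -> exists (L : R) (k : Z), is_lim (theta i) p_infty (Finite L) /\
               L = PI - asin (omega i / (kappa * Rinf)) + 2 * IZR k * PI) /\
       (~ P -> exists (L : R) (k : Z), is_lim (theta i) p_infty (Finite L) /\
               L = asin (omega i / (kappa * Rinf)) + 2 * IZR k * PI)) /\
  (forall i j t0, (i < N)%nat -> (j < N)%nat -> 0 <= t0 ->
     cos (theta i t0) >= -1 + mu -> cos (theta j t0) >= -1 + mu ->
     (omega i > omega j ->
        exists k : Z,
          (forall t, t >= t0 + tau ->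
             theta i t - theta j t + 2 * IZR k * PI
               <= (omega i - omega j) / lam + PI * exp (- lam * (t - t0 - tau))) /\
          (forall t, t >= t0 + tau + PI / (omega i - omega j) ->
             theta i t - theta j t + 2 * IZR k * PI
               >= (omega i - omega j) / (2 * kappa)
                  - (omega i - omega j) / (2 * kappa)
                    * exp (- 2 * kappa * (t - t0 - tau - PI / (omega i - omega j))))) /\
     (omega i = omega j ->
        exists k : Z, forall t, t >= t0 + tau ->
          Rabs (theta i t - theta j t + 2 * IZR k * PI)
            <= PI * exp (- lam * (t - t0 - tau)))).
Proof.
  intros tau0 lam0.
  destruct R_lim as [Rinf [HRl HRinf]].
  split; [|split; [|split; [|split]]].
  - intros t Ht. apply Rle_ge, part_a; auto.
  - intros i Hi. split; [|split].
    + destruct (classify i) as [HA|HB].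
      * destruct (theta_lim_A Rinf HRl HRinf i Hi HA) as [k Hk']. eexists; eauto.
      * destruct (theta_lim_B Rinf HRl HRinf i Hi HB) as [k Hk']. eexists; eauto.
    + apply range_b; auto.
    + apply (lim_ext_tail (dth i) _ 0 0).
      * intros t Ht. symmetry. apply is_derive_unique, th_der; auto.
      * apply dth_lim; auto.
  - intros i t0 Hi Ht0 Hc. apply part_c; auto.
  - exists Rinf. split; auto. intros i Hi P. split.
    + intros HP. destruct (classify i) as [[t0 [Ht0 Hc]]|HB].
      * exfalso. destruct HP as [c [Hc1 Hc2]]. specialize (Hc2 t0 Ht0). lra.
      * destruct (theta_lim_B Rinf HRl HRinf i Hi HB) as [k Hk']. exists (PI - asin (omega i / (kappa * Rinf)) + 2 * IZR k * PI), k. split; auto.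
    + intros HnP. destruct (theta_lim_A Rinf HRl HRinf i Hi (notP_A Rinf HRl HRinf i Hi HnP)) as [k Hk'].
      exists (asin (omega i / (kappa * Rinf)) + 2 * IZR k * PI), k. split; auto.
  - intros i j t0 Hi Hj Ht0 Hci Hcj. apply part_e; auto.
Qed.

End ODE.

Theorem theorem2p1 (N : nat) (omega : nat -> R) (kappa : R)
  (theta0 : nat -> R) (theta : nat -> R -> R) (mu : R) :
  (1 <= N)%nat ->
  is_solution N omega kappa theta0 theta ->
  let Rt := order_param N theta in
  let R0 := Rt 0 in
  let W := Omega_inf N omega in
  0 < R0 ->
  0 < mu -> mu < Rmin R0 1 ->
  kappa > W / ((R0 - mu) * sqrt (mu * (2 - mu))) ->
  let tau := PI / (kappa * (R0 - mu) * sqrt (mu * (2 - mu)) - W) in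
  let lam := kappa * (R0 - mu) * (1 - mu) in
  (* (a) *)
  (forall t, 0 <= t -> Rt t >= R0 - mu) /\
  (* (b) *)
  (forall i, (i < N)%nat ->
     (exists L : R, is_lim (theta i) p_infty (Finite L)) /\
     (exists a b : R, b - a < 2 * PI /\
        forall t, 0 <= t -> a <= theta i t <= b) /\
     is_lim (fun t => Derive (theta i) t) p_infty (Finite 0)) /\
  (* (c) *)
  (forall i t0, (i < N)%nat -> 0 <= t0 -> cos (theta i t0) >= -1 + mu ->
     (forall t, t >= t0 -> cos (theta i t) >= -1 + mu) /\
     (forall t, t >= t0 + tau -> cos (theta i t) >= 1 - mu)) /\
  (* (d) *)
  (exists Rinf : R, is_lim Rt p_infty (Finite Rinf) /\
     forall i, (i < N)%nat ->
       let P := exists c : R, c < -1 + mu /\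
                  forall t, 0 <= t -> cos (theta i t) <= c in
       (P -> exists (L : R) (k : Z), is_lim (theta i) p_infty (Finite L) /\
               L = PI - asin (omega i / (kappa * Rinf)) + 2 * IZR k * PI) /\
       (~ P -> exists (L : R) (k : Z), is_lim (theta i) p_infty (Finite L) /\
               L = asin (omega i / (kappa * Rinf)) + 2 * IZR k * PI)) /\
  (* (e) *)
  (forall i j t0, (i < N)%nat -> (j < N)%nat -> 0 <= t0 ->
     cos (theta i t0) >= -1 + mu -> cos (theta j t0) >= -1 + mu ->
     (omega i > omega j ->
        exists k : Z,
          (forall t, t >= t0 + tau ->
             theta i t - theta j t + 2 * IZR k * PI
               <= (omega i - omega j) / lam + PI * exp (- lam * (t - t0 - tau))) /\
          (forall t, t >= t0 + tau + PI / (omega i - omega j) ->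
             theta i t - theta j t + 2 * IZR k * PI
               >= (omega i - omega j) / (2 * kappa)
                  - (omega i - omega j) / (2 * kappa)
                    * exp (- 2 * kappa * (t - t0 - tau - PI / (omega i - omega j))))) /\
     (omega i = omega j ->
        exists k : Z, forall t, t >= t0 + tau ->
          Rabs (theta i t - theta j t + 2 * IZR k * PI)
            <= PI * exp (- lam * (t - t0 - tau)))).
Proof.
  intros HN Hsol Rt R0 W HR0 Hmu Hmu1 Hkap tau lam.
  destruct Hsol as [_ Hd].
  assert (Hm1 : mu < R0) by (pose proof (Rmin_l R0 1); lra).
  assert (Hm2 : mu < 1) by (pose proof (Rmin_r R0 1); lra).
  assert (Hs : 0 < sqrt (mu * (2 - mu))) by (apply sqrt_lt_R0; nra).
  assert (HX : 0 < (R0 - mu) * sqrt (mu * (2 - mu))) by (apply Rmult_lt_0_compat; lra).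
  assert (Hk : W < kappa * (R0 - mu) * sqrt (mu * (2 - mu))).
  { apply (Rmult_lt_compat_r ((R0 - mu) * sqrt (mu * (2 - mu)))) in Hkap; auto.
    unfold Rdiv in Hkap. rewrite Rmult_assoc, Rinv_l, Rmult_1_r in Hkap by lra. lra. }
  assert (Hder : forall i t, (i < N)%nat -> 0 <= t ->
    is_derive (theta i) t (omega i - kappa * order_param N theta t * sin (theta i t))).
  { intros i t Hi Ht. replace (omega i - kappa * order_param N theta t * sin (theta i t))
      with (omega i - kappa / INR N * sumN N (fun j => 1 + cos (theta j t)) * sin (theta i t))
      by (unfold order_param, Rdiv; ring).
    apply Hd; auto. }
  exact (main_sec N omega kappa theta mu HN Hder Hmu Hm2 Hm1 Hk).
Qed.
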